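(* Let $L>0$, $T>0$, $K,M$ positive integers, $\Delta x=L/K$, $\Delta t=T/M$, and $\hat L=\sqrt2\max\{\sqrt L,1/\sqrt L\}$. Let $(E,N,V)$ be a solution of the periodic Zakharov system $$\mathrm{i}E_t+E_{xx}=NE,\qquad N_t=V_{xx},\qquad V_t=N+|E|^2,\qquad V(0,0)=0$$ ($L$-periodic in $x$, initial data $E(0,\cdot)=E^0$, $N(0,\cdot)=N^0$, $N_t(0,\cdot)=N^1$ with $\int_0^LN^1\,\mathrm{d}x=0$) such that $E(t,\cdot),V(t,\cdot)$ are continuously differentiable. Let $C_\infty>0$ be a constant, independent of $\Delta t,\Delta x,m$, such that for all sufficiently small $\Delta x$, whenever $(E^{(0)},N^{(0)},V^{(0)}),\dots,(E^{(m)},N^{(m)},V^{(m)})$ solve the DVDM scheme below (with the initial data below), one has $\|E^{(m)}\|_2,\|\delta_x^+E^{(m)}\|_2,\|E^{(m)}\|_\infty,\|N^{(m)}\|_2,\|\delta_x^+V^{(m)}\|_2\le C_\infty$. Let $p>3$ and $r\ge C_\infty$. Set $$\varepsilon_1(p,r)=\frac{2(p-3)\Delta x}{2+2p(p\hat L+1)r+p(p+1)r(\Delta x)^{1/2}+(2p^2\hat L+p+1)r\Delta x},$$ $$\varepsilon_2(p,r)=\frac{\Delta x}{r\left(2p\hat L+1+(p+1/2)(\Delta x)^{1/2}+(2p\hat L+1/2)\Delta x\right)}.$$ If $\Delta t$ and $\Delta x$ are sufficiently small and $\Delta t<\min\{\Delta x,\varepsilon_1(p,r),\varepsilon_2(p,r)\}$,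 then the DVDM scheme $$\begin{cases}\mathrm{i}\,\delta_t^+E^{(m)}_k=-\delta_x^{\langle 2\rangle}\mu_t^+E^{(m)}_k+(\mu_t^+N^{(m)}_k)(\mu_t^+E^{(m)}_k),\\ \delta_t^+N^{(m)}_k=\delta_x^{\langle 2\rangle}\mu_t^+V^{(m)}_k,\\ \delta_t^+V^{(m)}_k=\mu_t^+N^{(m)}_k+\mu_t^+|E^{(m)}_k|^2,\end{cases}$$ with $E^{(0)}_k=E^0(k\Delta x)$, $N^{(0)}_k=N^0(k\Delta x)$ and $|V^{(0)}_k-V(0,k\Delta x)|\le C_V(\Delta x)^2$ (for a constant $C_V$ independent of $\Delta x$), has a unique solution $(E^{(m)},N^{(m)},V^{(m)})$ for $m=1,2,\dots,M$.
   Context: Grid functions $u^{(m)}=(u^{(m)}_k)_{k\in\mathbb{Z}}$ are $K$-periodic in $k$. Operators: $\delta_x^+u_k=(u_{k+1}-u_k)/\Delta x$, $\delta_x^{\langle 2\rangle}u_k=(u_{k+1}-2u_k+u_{k-1})/(\Delta x)^2$, $\delta_t^+u^{(m)}_k=(u^{(m+1)}_k-u^{(m)}_k)/\Delta t$, $\mu_t^+u^{(m)}_k=(u^{(m+1)}_k+u^{(m)}_k)/2$. Norms: $\|v\|_p=(\sum_{k=1}^K|v_k|^p\Delta x)^{1/p}$, $\|v\|_\infty=\max_k|v_k|$. *)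

(* Defs.v *)
From Stdlib Require Import Reals ZArith Lra Lia.
From Coquelicot Require Import Coquelicot.

(* Grid functions are Z-indexed; K-periodicity is imposed separately. *)
Definition periodicC (K : nat) (u : Z -> C) : Prop :=
  forall k : Z, u (k + Z.of_nat K)%Z = u k.
Definition periodicR (K : nat) (u : Z -> R) : Prop :=
  forall k : Z, u (k + Z.of_nat K)%Z = u k.

Fixpoint gsum (n : nat) (f : Z -> R) : R :=
  match n with
  | O => 0%R
  | S n' => (gsum n' f + f (Z.of_nat n))%R
  end.

(* gmax n f = max (0, f 1, ..., f n)  (used only on nonnegative f) *)
Fixpoint gmax (n : nat) (f : Z -> R) : R :=
  match n with
  | O => 0%R
  | S n' => Rmax (gmax n' f) (f (Z.of_nat n))
  end.

Definition norm2C (K : nat) (dx : R) (v : Z -> C) : R :=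
  sqrt (gsum K (fun k => Cmod (v k) ^ 2 * dx))%R.
Definition norm2R (K : nat) (dx : R) (v : Z -> R) : R :=
  sqrt (gsum K (fun k => Rabs (v k) ^ 2 * dx))%R.
Definition norminfC (K : nat) (v : Z -> C) : R :=
  gmax K (fun k => Cmod (v k)).

Definition dxpC (dx : R) (u : Z -> C) : Z -> C :=
  fun k => ((u (k + 1)%Z - u k) / RtoC dx)%C.
Definition dxpR (dx : R) (u : Z -> R) : Z -> R :=
  fun k => ((u (k + 1)%Z - u k) / dx)%R.
Definition dx2C (dx : R) (u : Z -> C) : Z -> C :=
  fun k => ((u (k + 1)%Z - RtoC 2 * u k + u (k - 1)%Z) / RtoC (dx ^ 2))%C.
Definition dx2R (dx : R) (u : Z -> R) : Z -> R :=
  fun k => ((u (k + 1)%Z - 2 * u k + u (k - 1)%Z) / dx ^ 2)%R.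

Definition dvdm_step (dx dt : R) (E : nat -> Z -> C) (N V : nat -> Z -> R)
  (m : nat) (k : Z) : Prop :=
  let muE := fun j => ((E (S m) j + E m j) / RtoC 2)%C in
  let muN := fun j => ((N (S m) j + N m j) / 2)%R in
  let muV := fun j => ((V (S m) j + V m j) / 2)%R in
  (Ci * ((E (S m) k - E m k) / RtoC dt)
     = - dx2C dx muE k + RtoC (muN k) * muE k)%C /\
  ((N (S m) k - N m k) / dt = dx2R dx muV k)%R /\
  ((V (S m) k - V m k) / dt
     = muN k + (Cmod (E (S m) k) ^ 2 + Cmod (E m k) ^ 2) / 2)%R.

Definition dvdm_solution (K : nat) (dx dt : R) (E0 : Z -> C) (N0 V0 : Z -> R)
  (m : nat) (E : nat -> Z -> C) (N V : nat -> Z -> R) : Prop :=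
  (forall j, (j <= m)%nat -> periodicC K (E j) /\ periodicR K (N j) /\ periodicR K (V j)) /\
  (forall k, E 0%nat k = E0 k /\ N 0%nat k = N0 k /\ V 0%nat k = V0 k) /\
  (forall j k, (j < m)%nat -> dvdm_step dx dt E N V j k).

Definition Lhat (L : R) : R := (sqrt 2 * Rmax (sqrt L) (/ sqrt L))%R.

Definition dvdm_eps1 (L dx p r : R) : R :=
  (2 * (p - 3) * dx /
   (2 + 2 * p * (p * Lhat L + 1) * r + p * (p + 1) * r * sqrt dx
    + (2 * p ^ 2 * Lhat L + p + 1) * r * dx))%R.

Definition dvdm_eps2 (L dx p r : R) : R :=
  (dx / (r * (2 * p * Lhat L + 1 + (p + 1 / 2) * sqrt dx
              + (2 * p * Lhat L + 1 / 2) * dx)))%R.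

Definition zakharov_solution (L T : R) (E : R -> R -> C) (N V : R -> R -> R) : Prop :=
  exists (Et Ex Exx : R -> R -> C) (Nt Vt Vx Vxx : R -> R -> R),
  (forall t x, 0 <= t <= T ->
     is_derive (fun s => E s x) t (Et t x) /\
     is_derive (fun y => E t y) x (Ex t x) /\
     is_derive (fun y => Ex t y) x (Exx t x) /\
     continuous (fun y => Ex t y) x /\
     is_derive (fun s => N s x) t (Nt t x) /\
     is_derive (fun s => V s x) t (Vt t x) /\
     is_derive (fun y => V t y) x (Vx t x) /\
     is_derive (fun y => Vx t y) x (Vxx t x) /\
     continuous (fun y => Vx t y) x /\
     (Ci * Et t x + Exx t x = RtoC (N t x) * E t x)%C /\
     Nt t x = Vxx t x /\
     Vt t x = (N t x + Cmod (E t x) ^ 2)%R /\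
     E t (x + L)%R = E t x /\ N t (x + L)%R = N t x /\ V t (x + L)%R = V t x) /\
  V 0 0 = 0%R /\
  is_RInt (fun x => Nt 0 x) 0 L 0%R.

(* Main.v *)
Require Import Defs.
From Stdlib Require Import Reals ZArith Lra Lia Psatz Classical ClassicalEpsilon FunctionalExtensionality.
From Coquelicot Require Import Coquelicot.
Open Scope R_scope.

Lemma gsum_ext n (f g : Z -> R) :
  (forall k, (1 <= k <= Z.of_nat n)%Z -> f k = g k) -> gsum n f = gsum n g.
Proof.
  induction n; intros H; simpl; auto.
  rewrite IHn. rewrite H. auto. lia. intros k Hk; apply H; lia.
Qed.

Lemma gsum_le n (f g : Z -> R) :
  (forall k, (1 <= k <= Z.of_nat n)%Z -> f k <= g k) -> gsum n f <= gsum n g.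
Proof.
  induction n; intros H; cbn [gsum]. lra.
  assert (gsum n f <= gsum n g) by (apply IHn; intros; apply H; lia).
  assert (f (Z.of_nat (S n)) <= g (Z.of_nat (S n))) by (apply H; lia). lra.
Qed.

Lemma gsum_plus n f g : gsum n (fun k => f k + g k) = gsum n f + gsum n g.
Proof. induction n; cbn [gsum]; [lra|]. rewrite IHn; lra. Qed.

Lemma gsum_scal n c f : gsum n (fun k => c * f k) = c * gsum n f.
Proof. induction n; cbn [gsum]; [lra|]. rewrite IHn; lra. Qed.

Lemma gsum_const n c : gsum n (fun _ => c) = INR n * c.
Proof. induction n; cbn [gsum]; [simpl; lra|]. rewrite IHn, S_INR; lra. Qed.

Lemma gsum_nonneg n f : (forall k, (1 <= k <= Z.of_nat n)%Z -> 0 <= f k) -> 0 <= gsum n f.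
Proof.
  intros H. replace 0 with (gsum n (fun _ => 0)). apply gsum_le; auto.
  rewrite gsum_const; ring.
Qed.

Lemma gsum_term n f k : (forall j, (1 <= j <= Z.of_nat n)%Z -> 0 <= f j) ->
  (1 <= k <= Z.of_nat n)%Z -> f k <= gsum n f.
Proof.
  induction n; intros H Hk. simpl in Hk; lia.
  cbn [gsum].
  assert (0 <= gsum n f) by (apply gsum_nonneg; intros; apply H; lia).
  assert (0 <= f (Z.of_nat (S n))) by (apply H; lia).
  destruct (Z.eq_dec k (Z.of_nat (S n))) as [->|Hne]. lra.
  assert (f k <= gsum n f) by (apply IHn; [intros; apply H; lia| lia]). lra.
Qed.

Lemma gsum_shiftm n h : gsum n (fun k => h (k - 1)%Z) = h 0%Z + gsum n h - h (Z.of_nat n).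
Proof.
  induction n. simpl. lra.
  cbn [gsum]. rewrite IHn. replace (Z.of_nat (S n) - 1)%Z with (Z.of_nat n) by lia. lra.
Qed.

Lemma gsum_shiftp n h : gsum n (fun k => h (k + 1)%Z) = gsum n h - h 1%Z + h (Z.of_nat n + 1)%Z.
Proof.
  induction n. simpl. lra.
  cbn [gsum]. rewrite IHn. replace (Z.of_nat (S n)) with (Z.of_nat n + 1)%Z by lia.
  destruct n. simpl. lra. lra.
Qed.

Lemma per_nat {A} K (f : Z -> A) : (forall k, f (k + Z.of_nat K)%Z = f k) ->
  forall k (n : nat), f (k + Z.of_nat n * Z.of_nat K)%Z = f k.
Proof.
  intros H k n. induction n. f_equal; lia.
  replace (k + Z.of_nat (S n) * Z.of_nat K)%Z with ((k + Z.of_nat n * Z.of_nat K) + Z.of_nat K)%Z by lia.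
  rewrite H; auto.
Qed.

Lemma per_Z {A} K (f : Z -> A) : (forall k, f (k + Z.of_nat K)%Z = f k) ->
  forall k q, f (k + q * Z.of_nat K)%Z = f k.
Proof.
  intros H k q. destruct (Z_le_gt_dec 0 q).
  - replace q with (Z.of_nat (Z.to_nat q)) by lia. apply per_nat; auto.
  - pose proof (per_nat K f H (k + q * Z.of_nat K)%Z (Z.to_nat (- q))) as H2.
    rewrite Z2Nat.id in H2 by lia.
    replace (k + q * Z.of_nat K + - q * Z.of_nat K)%Z with k in H2 by lia.
    auto.
Qed.

Lemma per_red {A} K (f : Z -> A) : (0 < K)%nat -> (forall k, f (k + Z.of_nat K)%Z = f k) ->
  forall k, exists j, (1 <= j <= Z.of_nat K)%Z /\ f k = f j.
Proof.
  intros HK H k. exists (((k - 1) mod Z.of_nat K) + 1)%Z. split.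
  pose proof (Z.mod_pos_bound (k-1) (Z.of_nat K)). lia.
  pose proof (Z.div_mod (k-1) (Z.of_nat K) ltac:(lia)).
  rewrite <- (per_Z K f H (((k - 1) mod Z.of_nat K) + 1)%Z ((k - 1) / Z.of_nat K)). f_equal.
  remember ((k - 1) / Z.of_nat K)%Z as q. remember ((k - 1) mod Z.of_nat K)%Z as m. nia.
Qed.
Definition Lr (f : Z -> R) (k : Z) : R := f (k + 1)%Z - 2 * f k + f (k - 1)%Z.
Definition Dr (f : Z -> R) (k : Z) : R := f (k + 1)%Z - f k.

Lemma perR_at K f : periodicR K f -> forall k j, j = (k + Z.of_nat K)%Z -> f j = f k.
Proof. intros H k j ->; apply H. Qed.

Lemma per_Dr K f : periodicR K f -> periodicR K (Dr f).
Proof.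
  intros H k; unfold Dr.
  rewrite (perR_at K f H (k+1) (k + Z.of_nat K + 1)) by lia. rewrite H; auto.
Qed.

Lemma per_Lr K f : periodicR K f -> periodicR K (Lr f).
Proof.
  intros H k; unfold Lr.
  rewrite (perR_at K f H (k+1) (k + Z.of_nat K + 1)) by lia.
  rewrite (perR_at K f H (k-1) (k + Z.of_nat K - 1)) by lia. rewrite H; auto.
Qed.



Lemma sbp K f g : periodicR K f -> periodicR K g ->
  gsum K (fun k => Lr f k * g k) = - gsum K (fun k => Dr f k * Dr g k).
Proof.
  intros Hf Hg.
  set (h := fun j => Dr f j * g (j + 1)%Z).
  assert (Hh : h 0%Z = h (Z.of_nat K)).
  { unfold h. pose proof (per_Dr K f Hf 0%Z) as E1. simpl in E1.
    rewrite E1. rewrite (perR_at K g Hg 1 (Z.of_nat K + 1)) by lia. auto. }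
  transitivity (gsum K (fun k => Dr f k * g k + (-1) * h (k - 1)%Z)).
  { apply gsum_ext; intros k _; unfold h; unfold Lr, Dr; cbv beta. replace (k - 1 + 1)%Z with k by lia. ring. }
  rewrite gsum_plus, gsum_scal, gsum_shiftm, <- Hh.
  replace (- gsum K (fun k => Dr f k * Dr g k)) with
     (gsum K (fun k => Dr f k * g k + (-1) * h k)).
  rewrite gsum_plus, gsum_scal. ring.
  rewrite <- (Rmult_1_l (gsum K (fun k => Dr f k * Dr g k))).
  rewrite Ropp_mult_distr_l, <- gsum_scal. apply gsum_ext; intros k _; unfold h, Dr; ring.
Qed.

Lemma sbp_sym K f g : periodicR K f -> periodicR K g ->
  gsum K (fun k => Lr f k * g k) = gsum K (fun k => Lr g k * f k).
Proof.
  intros Hf Hg; rewrite !sbp by auto. f_equal. apply gsum_ext; intros; ring.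
Qed.

Lemma per_sq K f : periodicR K f -> periodicR K (fun k => f k ^ 2).
Proof. intros H k; simpl; rewrite H; auto. Qed.

Lemma sumD2 K f : periodicR K f ->
  gsum K (fun k => Dr f k ^ 2) <= 4 * gsum K (fun k => f k ^ 2).
Proof.
  intros H.
  apply Rle_trans with (gsum K (fun k => 2 * (f (k+1)%Z ^ 2) + 2 * (f k ^ 2))).
  { apply gsum_le; intros k _; unfold Dr; cbv beta. pose proof (pow2_ge_0 (f (k+1)%Z + f k)). nra. }
  rewrite gsum_plus, !gsum_scal.
  rewrite (gsum_shiftp K (fun k => f k ^ 2)).
  rewrite (perR_at K f H 1 (Z.of_nat K + 1)) by lia. lra.
Qed.

Lemma sumL2 K f : periodicR K f ->
  gsum K (fun k => Lr f k ^ 2) <= 18 * gsum K (fun k => f k ^ 2).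
Proof.
  intros H.
  apply Rle_trans with (gsum K (fun k => 3 * (f (k+1)%Z ^ 2) + 12 * (f k ^ 2) + 3 * (f (k-1)%Z ^ 2))).
  { apply gsum_le; intros k _; unfold Lr; cbv beta. pose proof (pow2_ge_0 (f (k+1)%Z - f (k-1)%Z)). pose proof (pow2_ge_0 (f (k+1)%Z + 2 * f k)). pose proof (pow2_ge_0 (f (k-1)%Z + 2 * f k)). nra. }
  rewrite !gsum_plus, !gsum_scal.
  rewrite (gsum_shiftp K (fun k => f k ^ 2)).
  rewrite (gsum_shiftm K (fun k => f k ^ 2)).
  rewrite (perR_at K f H 1 (Z.of_nat K + 1)) by lia.
  rewrite (perR_at K f H 0 (Z.of_nat K)) by lia. lra.
Qed.

Definition nsC K (u : Z -> C) : R := gsum K (fun k => fst (u k) ^ 2 + snd (u k) ^ 2).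
Definition ipC K (u v : Z -> C) : R := gsum K (fun k => fst (u k) * fst (v k) + snd (u k) * snd (v k)).
Definition csub (u v : Z -> C) : Z -> C := fun k => (fst (u k) - fst (v k), snd (u k) - snd (v k)).

Lemma nsC_nonneg K u : 0 <= nsC K u.
Proof. apply gsum_nonneg; intros; nra. Qed.

Lemma per_csub K u v : periodicC K u -> periodicC K v -> periodicC K (csub u v).
Proof. intros Hu Hv k; unfold csub; rewrite Hu, Hv; auto. Qed.

Lemma comp_bound K u : (0 < K)%nat -> periodicC K u ->
  forall k, fst (u k) ^ 2 + snd (u k) ^ 2 <= nsC K u.
Proof.
  intros HK Hu k. destruct (per_red K u HK Hu k) as [j [Hj ->]].
  apply (gsum_term K (fun k => fst (u k) ^ 2 + snd (u k) ^ 2)); auto.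
  intros; nra.
Qed.

Lemma comp_boundR K f : (0 < K)%nat -> periodicR K f ->
  forall k, f k ^ 2 <= gsum K (fun k => f k ^ 2).
Proof.
  intros HK Hf k. destruct (per_red K f HK Hf k) as [j [Hj ->]].
  apply (gsum_term K (fun k => f k ^ 2)); auto. intros; nra.
Qed.

Lemma div_lt_l a b c : 0 < b -> a < c * b -> a / b < c.
Proof. intros Hb H. apply Rmult_lt_reg_r with b; auto. unfold Rdiv; rewrite Rmult_assoc, Rinv_l by lra; lra. Qed.
Lemma div_le_l a b c : 0 < b -> a <= c * b -> a / b <= c.
Proof. intros Hb H. apply Rmult_le_reg_r with b; auto. unfold Rdiv; rewrite Rmult_assoc, Rinv_l by lra; lra. Qed.
Lemma lt_div_r a b c : 0 < b -> a * b < c -> a < c / b.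
Proof. intros Hb H. apply Rmult_lt_reg_r with b; auto. unfold Rdiv; rewrite Rmult_assoc, Rinv_l by lra; lra. Qed.
Lemma le_div_r a b c : 0 < b -> a * b <= c -> a <= c / b.
Proof. intros Hb H. apply Rmult_le_reg_r with b; auto. unfold Rdiv; rewrite Rmult_assoc, Rinv_l by lra; lra. Qed.

Lemma sq_le_abs X Y : 0 <= Y -> X ^ 2 <= Y ^ 2 -> Rabs X <= Y.
Proof.
  intros HY H. destruct (Rle_lt_dec (Rabs X) Y) as [|Hlt]; auto.
  exfalso. assert (Rabs X ^ 2 = X ^ 2) by (unfold Rabs; destruct (Rcase_abs X); ring).
  assert (0 <= Rabs X) by apply Rabs_pos. nra.
Qed.

Lemma abs_le_sq X Y : Rabs X <= Y -> X ^ 2 <= Y ^ 2.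
Proof.
  intros H. assert (Rabs X ^ 2 = X ^ 2) by (unfold Rabs; destruct (Rcase_abs X); ring).
  assert (0 <= Rabs X) by apply Rabs_pos. nra.
Qed.

Lemma geo_tele (y : nat -> R) c B : 0 <= c < 1 -> 0 <= B ->
  (forall n, Rabs (y (S n) - y n) <= c ^ n * B) ->
  forall n i, Rabs (y (i + n)%nat - y n) <= B * (c ^ n - c ^ (i + n)) / (1 - c).
Proof.
  intros Hc HB H n i. induction i.
  - simpl. replace (y n - y n) with 0 by ring. rewrite Rabs_R0.
    replace (B * (c ^ n - c ^ n) / (1 - c)) with 0 by (field; lra). lra.
  - replace (S i + n)%nat with (S (i + n)) by lia.
    replace (y (S (i + n)) - y n) with ((y (S (i + n)) - y (i + n)%nat) + (y (i + n)%nat - y n)) by ring.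
    eapply Rle_trans. apply Rabs_triang.
    specialize (H (i + n)%nat).
    replace (B * (c ^ n - c ^ S (i + n)) / (1 - c)) with
      (c ^ (i + n) * B + B * (c ^ n - c ^ (i + n)) / (1 - c)) by (simpl; field; lra).
    lra.
Qed.

Lemma geo_bound (y : nat -> R) c B : 0 <= c < 1 -> 0 <= B ->
  (forall n, Rabs (y (S n) - y n) <= c ^ n * B) ->
  forall n m, (n <= m)%nat -> Rabs (y m - y n) <= c ^ n * B / (1 - c).
Proof.
  intros Hc HB H n m Hnm.
  replace m with ((m - n) + n)%nat by lia.
  eapply Rle_trans. apply (geo_tele y c B Hc HB H).
  assert (0 <= c ^ (m - n + n)) by (apply pow_le; lra).
  unfold Rdiv. apply Rmult_le_compat_r. apply Rlt_le, Rinv_0_lt_compat; lra. nra.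
Qed.

Lemma geo_cauchy (y : nat -> R) c B : 0 <= c < 1 -> 0 <= B ->
  (forall n, Rabs (y (S n) - y n) <= c ^ n * B) -> Cauchy_crit y.
Proof.
  intros Hc HB H eps Heps.
  destruct (pow_lt_1_zero c ltac:(rewrite Rabs_pos_eq; lra) (eps * (1 - c) / (2 * B + 1)))
    as [N HN].
  { apply Rdiv_lt_0_compat; nra. }
  exists N. intros n m Hn Hm. unfold R_dist.
  specialize (HN N (le_n N)). rewrite Rabs_pos_eq in HN by (apply pow_le; lra).
  pose proof (geo_bound y c B Hc HB H N n Hn).
  pose proof (geo_bound y c B Hc HB H N m Hm).
  replace (y n - y m) with ((y n - y N) - (y m - y N)) by ring.
  eapply Rle_lt_trans. apply Rabs_triang. rewrite Rabs_Ropp.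
  assert (c ^ N * B / (1 - c) * 2 < eps).
  { assert (0 <= c ^ N) by (apply pow_le; lra).
    assert (c ^ N * (2 * B + 1) < eps * (1 - c)).
    { replace (eps * (1 - c)) with (eps * (1 - c) / (2 * B + 1) * (2 * B + 1)) by (field; lra).
      apply Rmult_lt_compat_r; lra. }
    replace (c ^ N * B / (1 - c) * 2) with (2 * (c ^ N * B) / (1 - c)) by (field; lra).
    apply div_lt_l; lra. }
  lra.
Qed.

Lemma lim_bound (y : nat -> R) l n e : Un_cv y l ->
  (forall m, (n <= m)%nat -> Rabs (y m - y n) <= e) -> Rabs (l - y n) <= e.
Proof.
  intros Hl H. destruct (Rle_lt_dec (Rabs (l - y n)) e) as [|Hlt]; auto.
  exfalso. destruct (Hl (Rabs (l - y n) - e)) as [N HN]. lra.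
  specialize (HN (Nat.max N n) ltac:(lia)). specialize (H (Nat.max N n) ltac:(lia)).
  unfold R_dist in HN.
  pose proof (Rabs_triang (l - y (Nat.max N n)) (y (Nat.max N n) - y n)).
  replace (l - y (Nat.max N n) + (y (Nat.max N n) - y n)) with (l - y n) in H0 by ring.
  rewrite <- Rabs_Ropp in HN. replace (- (y (Nat.max N n) - l)) with (l - y (Nat.max N n)) in HN by ring.
  lra.
Qed.

Lemma zero_geo A Cst c : 0 <= A -> 0 <= Cst -> 0 <= c < 1 -> (forall n, A <= Cst * c ^ n) -> A = 0.
Proof.
  intros HA HC Hc H. destruct (Req_dec A 0); auto. exfalso.
  destruct (pow_lt_1_zero c ltac:(rewrite Rabs_pos_eq; lra) (A / (Cst + 1))) as [N HN].
  { apply Rdiv_lt_0_compat; lra. }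
  specialize (HN N (le_n N)). rewrite Rabs_pos_eq in HN by (apply pow_le; lra).
  specialize (H N). assert (0 <= c ^ N) by (apply pow_le; lra).
  apply Rmult_lt_compat_r with (r := Cst + 1) in HN; [|lra].
  unfold Rdiv in HN; rewrite Rmult_assoc, Rinv_l in HN by lra. nra.
Qed.

Lemma banach K (HK : (0 < K)%nat) (Phi : (Z -> C) -> (Z -> C)) c : 0 <= c < 1 ->
  (forall u, periodicC K u -> periodicC K (Phi u)) ->
  (forall u v, periodicC K u -> periodicC K v ->
     nsC K (csub (Phi u) (Phi v)) <= c ^ 2 * nsC K (csub u v)) ->
  exists u, periodicC K u /\ forall k, Phi u k = u k.
Proof.
  intros Hc Hper Hcon.
  set (x := fun n => Nat.iter n Phi (fun _ => (0, 0) : C)).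
  assert (HxS : forall n, x (S n) = Phi (x n)) by reflexivity.
  assert (Hx : forall n, periodicC K (x n)).
  { induction n. intros k; reflexivity. rewrite HxS; auto. }
  set (d0 := nsC K (csub (x 1%nat) (x 0%nat))).
  assert (Hd : forall n, nsC K (csub (x (S n)) (x n)) <= (c ^ 2) ^ n * d0).
  { induction n. rewrite pow_O; unfold d0; lra.
    rewrite (HxS (S n)), (HxS n) at 1. rewrite <- HxS.
    eapply Rle_trans. apply Hcon; auto.
    simpl ((c ^ 2) ^ S n). rewrite Rmult_assoc. apply Rmult_le_compat_l; auto. apply pow2_ge_0. }
  assert (Hd0 : 0 <= d0) by apply nsC_nonneg.
  set (B := sqrt d0).
  assert (HB : 0 <= B) by apply sqrt_pos.
  assert (Hstep : forall k n, Rabs (fst (x (S n) k) - fst (x n k)) <= c ^ n * B /\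
                              Rabs (snd (x (S n) k) - snd (x n k)) <= c ^ n * B).
  { intros k n.
    pose proof (comp_bound K _ HK (per_csub K _ _ (Hx (S n)) (Hx n)) k) as H1.
    specialize (Hd n). unfold csub at 1 2 in H1; cbn [fst snd] in H1.
    assert (Hsq : (c ^ n * B) ^ 2 = (c ^ 2) ^ n * d0).
    { rewrite Rpow_mult_distr. unfold B. rewrite pow2_sqrt by auto.
      rewrite <- !pow_mult. f_equal. f_equal. lia. }
    assert (0 <= c ^ n) by (apply pow_le; lra).
    pose proof (pow2_ge_0 (fst (x (S n) k) - fst (x n k))).
    pose proof (pow2_ge_0 (snd (x (S n) k) - snd (x n k))).
    split; apply sq_le_abs; try (apply Rmult_le_pos; auto); rewrite Hsq; lra. }
  assert (Hcf : forall k, Cauchy_crit (fun n => fst (x n k))).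
  { intros k; apply (geo_cauchy _ c B); auto. intros n; apply (proj1 (Hstep k n)). }
  assert (Hcs : forall k, Cauchy_crit (fun n => snd (x n k))).
  { intros k; apply (geo_cauchy _ c B); auto. intros n; apply (proj2 (Hstep k n)). }
  set (lf := fun k => proj1_sig (Rcomplete.R_complete _ (Hcf k))).
  set (ls := fun k => proj1_sig (Rcomplete.R_complete _ (Hcs k))).
  assert (Hlf : forall k, Un_cv (fun n => fst (x n k)) (lf k)).
  { intros k; unfold lf; destruct (Rcomplete.R_complete _ (Hcf k)); auto. }
  assert (Hls : forall k, Un_cv (fun n => snd (x n k)) (ls k)).
  { intros k; unfold ls; destruct (Rcomplete.R_complete _ (Hcs k)); auto. }
  set (B' := B / (1 - c)).
  assert (HB' : 0 <= B') by (unfold B'; apply Rdiv_le_0_compat; lra).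
  assert (Hbf : forall k n, Rabs (lf k - fst (x n k)) <= c ^ n * B' /\
                            Rabs (ls k - snd (x n k)) <= c ^ n * B').
  { intros k n. unfold B'. rewrite Rmult_div_assoc. split.
    - apply (lim_bound (fun n => fst (x n k))); auto. intros m Hm.
      apply (geo_bound (fun n => fst (x n k)) c B); auto. intros j; apply (proj1 (Hstep k j)).
    - apply (lim_bound (fun n => snd (x n k))); auto. intros m Hm.
      apply (geo_bound (fun n => snd (x n k)) c B); auto. intros j; apply (proj2 (Hstep k j)). }
  set (us := fun k => (lf k, ls k) : C).
  assert (Hus : periodicC K us).
  { intros k. unfold us. f_equal.
    - apply (UL_sequence (fun n => fst (x n k))); auto.
      intros eps Heps. destruct (Hlf (k + Z.of_nat K)%Z eps Heps) as [N HN]. exists N.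
      intros m Hm. rewrite <- (Hx m k). apply HN; auto.
    - apply (UL_sequence (fun n => snd (x n k))); auto.
      intros eps Heps. destruct (Hls (k + Z.of_nat K)%Z eps Heps) as [N HN]. exists N.
      intros m Hm. rewrite <- (Hx m k). apply HN; auto. }
  exists us. split; auto.
  assert (HcB : forall n, nsC K (csub (Phi us) (x (S n))) <= (sqrt (2 * INR K) * (c ^ n * B')) ^ 2).
  { intros n. rewrite HxS. eapply Rle_trans. apply Hcon; auto.
    rewrite Rpow_mult_distr, pow2_sqrt by (pose proof (pos_INR K); lra).
    assert (nsC K (csub us (x n)) <= gsum K (fun _ => 2 * (c ^ n * B') ^ 2)).
    { apply gsum_le. intros j _. unfold csub, us; cbn [fst snd].
      destruct (Hbf j n) as [H1 H2]. apply abs_le_sq in H1. apply abs_le_sq in H2. lra. }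
    rewrite gsum_const in H.
    assert (c ^ 2 <= 1) by (assert (0 <= c) by lra; simpl; nra).
    assert (0 <= nsC K (csub us (x n))) by apply nsC_nonneg. nra. }
  intros k.
  assert (HP : forall n, Rabs (fst (Phi us k) - lf k) <= (sqrt (2 * INR K) + 1) * B' * c ^ n /\ Rabs (snd (Phi us k) - ls k) <= (sqrt (2 * INR K) + 1) * B' * c ^ n).
  { intros n.
    pose proof (comp_bound K _ HK (per_csub K _ _ (Hper us Hus) (Hx (S n))) k) as H1.
    specialize (HcB n). unfold csub at 1 2 in H1; cbn [fst snd] in H1.
    assert (0 <= c ^ n) by (apply pow_le; lra).
    assert (0 <= sqrt (2 * INR K)) by apply sqrt_pos.
    assert (0 <= sqrt (2 * INR K) * (c ^ n * B')) by (apply Rmult_le_pos; auto; apply Rmult_le_pos; auto).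
    pose proof (pow2_ge_0 (fst (Phi us k) - fst (x (S n) k))).
    pose proof (pow2_ge_0 (snd (Phi us k) - snd (x (S n) k))).
    assert (A1 : Rabs (fst (Phi us k) - fst (x (S n) k)) <= sqrt (2 * INR K) * (c ^ n * B'))
      by (apply sq_le_abs; auto; lra).
    assert (A2 : Rabs (snd (Phi us k) - snd (x (S n) k)) <= sqrt (2 * INR K) * (c ^ n * B'))
      by (apply sq_le_abs; auto; lra).
    destruct (Hbf k (S n)) as [B1 B2].
    assert (c ^ S n <= c ^ n) by (simpl; nra).
    assert (c ^ S n * B' <= c ^ n * B') by (apply Rmult_le_compat_r; auto).
    split.
    - replace (fst (Phi us k) - lf k) with ((fst (Phi us k) - fst (x (S n) k)) - (lf k - fst (x (S n) k))) by ring.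
      eapply Rle_trans. apply Rabs_triang. rewrite Rabs_Ropp.
      replace ((sqrt (2 * INR K) + 1) * B' * c ^ n) with (sqrt (2 * INR K) * (c ^ n * B') + c ^ n * B') by ring. lra.
    - replace (snd (Phi us k) - ls k) with ((snd (Phi us k) - snd (x (S n) k)) - (ls k - snd (x (S n) k))) by ring.
      eapply Rle_trans. apply Rabs_triang. rewrite Rabs_Ropp.
      replace ((sqrt (2 * INR K) + 1) * B' * c ^ n) with (sqrt (2 * INR K) * (c ^ n * B') + c ^ n * B') by ring. lra. }
  assert (0 <= (sqrt (2 * INR K) + 1) * B') by (pose proof (sqrt_pos (2 * INR K)); nra).
  assert (E1 : Rabs (fst (Phi us k) - lf k) = 0)
    by (apply (zero_geo _ ((sqrt (2 * INR K) + 1) * B') c); auto; [apply Rabs_pos | intros n; apply HP]).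
  assert (E2 : Rabs (snd (Phi us k) - ls k) = 0)
    by (apply (zero_geo _ ((sqrt (2 * INR K) + 1) * B') c); auto; [apply Rabs_pos | intros n; apply HP]).
  apply Rabs_eq_0 in E1. apply Rabs_eq_0 in E2.
  change (us k) with (lf k, ls k). destruct (Phi us k) as [p q]; cbn [fst snd] in *. f_equal; lra.
Qed.

Lemma zaran K (HK : (0 < K)%nat) (F : (Z -> C) -> (Z -> C)) B : 0 <= B ->
  (forall u, periodicC K u -> periodicC K (F u)) ->
  (forall u v, periodicC K u -> periodicC K v ->
     nsC K (csub u v) <= ipC K (csub (F u) (F v)) (csub u v)) ->
  (forall u v, periodicC K u -> periodicC K v ->
     nsC K (csub (F u) (F v)) <= B * nsC K (csub u v)) ->
  exists u, periodicC K u /\ forall k, F u k = (0, 0).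
Proof.
  intros HB Hper Hmon Hlip.
  set (al := / (B + 1)).
  assert (Hal : 0 < al) by (unfold al; apply Rinv_0_lt_compat; lra).
  set (Phi := fun u k => (fst (u k) - al * fst (F u k), snd (u k) - al * snd (F u k)) : C).
  destruct (banach K HK Phi (sqrt (B / (B + 1)))) as [u [Hu Hfix]].
  - split. apply sqrt_pos. apply (Rlt_le_trans _ (sqrt 1)); [|rewrite sqrt_1; lra].
    apply sqrt_lt_1_alt. split.
    apply Rdiv_le_0_compat; lra. apply div_lt_l; lra.
  - intros u Hu k. unfold Phi. rewrite Hu, (Hper u Hu). auto.
  - intros u v Hu Hv.
    rewrite pow2_sqrt by (apply Rdiv_le_0_compat; lra).
    assert (E : nsC K (csub (Phi u) (Phi v)) =
      nsC K (csub u v) + (- 2 * al) * ipC K (csub (F u) (F v)) (csub u v)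
      + (al ^ 2) * nsC K (csub (F u) (F v))).
    { unfold nsC, ipC. rewrite <- !gsum_scal, <- !gsum_plus. apply gsum_ext.
      intros k _. unfold csub, Phi; cbn [fst snd]. ring. }
    rewrite E.
    specialize (Hmon u v Hu Hv). specialize (Hlip u v Hu Hv).
    pose proof (nsC_nonneg K (csub u v)).
    assert (al ^ 2 * nsC K (csub (F u) (F v)) <= al ^ 2 * (B * nsC K (csub u v))).
    { apply Rmult_le_compat_l; auto. apply pow2_ge_0. }
    assert (- 2 * al * ipC K (csub (F u) (F v)) (csub u v) <= - 2 * al * nsC K (csub u v)) by nra.
    assert (Hq : 1 - 2 * al + al ^ 2 * B <= B / (B + 1)).
    { unfold al. apply le_div_r; [lra|]. field_simplify; [|lra].
      apply div_le_l; [nra|]. nra. }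
    assert ((1 - 2 * al + al ^ 2 * B) * nsC K (csub u v) <= B / (B + 1) * nsC K (csub u v))
      by (apply Rmult_le_compat_r; auto).
    nra.
  - exists u. split; auto. intros k. specialize (Hfix k). unfold Phi in Hfix.
    destruct (u k) as [a b]; destruct (F u k) as [p q]; cbn [fst snd] in *.
    injection Hfix; intros H1 H2.
    assert (p = 0) by (apply (Rmult_eq_reg_l al); lra).
    assert (q = 0) by (apply (Rmult_eq_reg_l al); lra). subst; auto.
Qed.

Definition SchrRel (dx a : R) (E0 : Z -> C) (P : Z -> R) (u : Z -> C) : Prop :=
  forall k,
    fst (u k) - fst (E0 k) = - (a / dx ^ 2) * Lr (fun j => snd (u j) + snd (E0 j)) k
                             + a * P k * (snd (u k) + snd (E0 k)) /\
    snd (u k) - snd (E0 k) = (a / dx ^ 2) * Lr (fun j => fst (u j) + fst (E0 j)) k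
                             - a * P k * (fst (u k) + fst (E0 k)).

Definition WaveRel (dx a : R) (N0 V0 W N1 V1 : Z -> R) : Prop :=
  forall k,
    N1 k - N0 k = (a / dx ^ 2) * Lr (fun j => V1 j + V0 j) k /\
    V1 k - V0 k = a * (N1 k + N0 k) + a * W k.

Lemma per_fst K (u : Z -> C) : periodicC K u -> periodicR K (fun k => fst (u k)).
Proof. intros H k; rewrite H; auto. Qed.
Lemma per_snd K (u : Z -> C) : periodicC K u -> periodicR K (fun k => snd (u k)).
Proof. intros H k; rewrite H; auto. Qed.
Lemma per_plus K f g : periodicR K f -> periodicR K g -> periodicR K (fun k => f k + g k).
Proof. intros Hf Hg k; rewrite Hf, Hg; auto. Qed.
Lemma per_minus K f g : periodicR K f -> periodicR K g -> periodicR K (fun k => f k - g k).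
Proof. intros Hf Hg k; rewrite Hf, Hg; auto. Qed.

Lemma Lr_lin f g al be k : Lr (fun j => al * f j + be * g j) k = al * Lr f k + be * Lr g k.
Proof. unfold Lr; ring. Qed.

Lemma schr_exists K dx a E0 P : (0 < K)%nat -> 0 < dx -> 0 <= a ->
  periodicC K E0 -> periodicR K P -> exists u, periodicC K u /\ SchrRel dx a E0 P u.
Proof.
  intros HK Hdx Ha HE HP.
  set (be := a / dx ^ 2).
  set (F := fun (u : Z -> C) k =>
    (fst (u k) - fst (E0 k) + be * Lr (fun j => snd (u j) + snd (E0 j)) k
       - a * P k * (snd (u k) + snd (E0 k)),
     snd (u k) - snd (E0 k) - be * Lr (fun j => fst (u j) + fst (E0 j)) k
       + a * P k * (fst (u k) + fst (E0 k))) : C).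
  set (Pm := gsum K (fun k => P k ^ 2)).
  assert (HPm : forall k, P k ^ 2 <= Pm) by (intros; apply comp_boundR; auto).
  assert (HPm0 : 0 <= Pm) by (apply gsum_nonneg; intros; apply pow2_ge_0).
  destruct (zaran K HK F (3 + 3 * a ^ 2 * Pm + 54 * be ^ 2)) as [u [Hu H0]].
  - pose proof (pow2_ge_0 a). pose proof (pow2_ge_0 be).
    assert (0 <= a ^ 2 * Pm) by (apply Rmult_le_pos; auto). lra.
  - intros u Hu k. unfold F.
    rewrite (per_Lr K _ (per_plus K _ _ (per_snd K u Hu) (per_snd K E0 HE))).
    rewrite (per_Lr K _ (per_plus K _ _ (per_fst K u Hu) (per_fst K E0 HE))).
    rewrite Hu, HE, HP. auto.
  - intros u v Hu Hv.
    set (d1 := fun j => fst (u j) - fst (v j)).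
    set (d2 := fun j => snd (u j) - snd (v j)).
    assert (E : ipC K (csub (F u) (F v)) (csub u v) =
                nsC K (csub u v) + be * (gsum K (fun k => Lr d2 k * d1 k) +
                                         (-1) * gsum K (fun k => Lr d1 k * d2 k))).
    { unfold ipC, nsC. rewrite <- (gsum_scal K (-1)), <- gsum_plus, <- gsum_scal, <- gsum_plus.
      apply gsum_ext. intros k _. unfold csub, F, d1, d2; cbn [fst snd]. unfold Lr. ring. }
    rewrite E, (sbp_sym K d2 d1).
    + lra.
    + apply per_minus; [apply per_snd | apply per_snd]; auto.
    + apply per_minus; [apply per_fst | apply per_fst]; auto.
  - intros u v Hu Hv.
    set (d1 := fun j => fst (u j) - fst (v j)).
    set (d2 := fun j => snd (u j) - snd (v j)).
    assert (Hd1 : periodicR K d1) by (apply per_minus; [apply per_fst | apply per_fst]; auto).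
    assert (Hd2 : periodicR K d2) by (apply per_minus; [apply per_snd | apply per_snd]; auto).
    apply Rle_trans with (gsum K (fun k => (3 + 3 * a ^ 2 * Pm) * (d1 k ^ 2 + d2 k ^ 2)
                                      + (3 * be ^ 2) * (Lr d1 k ^ 2 + Lr d2 k ^ 2))).
    + apply gsum_le. intros k _. unfold csub, F; cbn [fst snd].
      replace (fst (u k) - fst (E0 k) + be * Lr (fun j => snd (u j) + snd (E0 j)) k -
               a * P k * (snd (u k) + snd (E0 k)) -
               (fst (v k) - fst (E0 k) + be * Lr (fun j => snd (v j) + snd (E0 j)) k -
               a * P k * (snd (v k) + snd (E0 k))))
        with (d1 k + be * Lr d2 k - a * P k * d2 k) by (unfold d1, d2, Lr; ring).
      replace (snd (u k) - snd (E0 k) - be * Lr (fun j => fst (u j) + fst (E0 j)) k +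
               a * P k * (fst (u k) + fst (E0 k)) -
               (snd (v k) - snd (E0 k) - be * Lr (fun j => fst (v j) + fst (E0 j)) k +
               a * P k * (fst (v k) + fst (E0 k))))
        with (d2 k - be * Lr d1 k + a * P k * d1 k) by (unfold d1, d2, Lr; ring).
      specialize (HPm k).
      assert (X1 : (a * P k * d2 k) ^ 2 <= a ^ 2 * Pm * d2 k ^ 2).
      { replace ((a * P k * d2 k) ^ 2) with ((a ^ 2 * d2 k ^ 2) * P k ^ 2) by ring.
        replace (a ^ 2 * Pm * d2 k ^ 2) with ((a ^ 2 * d2 k ^ 2) * Pm) by ring.
        apply Rmult_le_compat_l; auto. apply Rmult_le_pos; apply pow2_ge_0. }
      assert (X2 : (a * P k * d1 k) ^ 2 <= a ^ 2 * Pm * d1 k ^ 2).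
      { replace ((a * P k * d1 k) ^ 2) with ((a ^ 2 * d1 k ^ 2) * P k ^ 2) by ring.
        replace (a ^ 2 * Pm * d1 k ^ 2) with ((a ^ 2 * d1 k ^ 2) * Pm) by ring.
        apply Rmult_le_compat_l; auto. apply Rmult_le_pos; apply pow2_ge_0. }
      pose proof (pow2_ge_0 (d1 k - be * Lr d2 k)).
      pose proof (pow2_ge_0 (d1 k + a * P k * d2 k)).
      pose proof (pow2_ge_0 (be * Lr d2 k + a * P k * d2 k)).
      pose proof (pow2_ge_0 (d2 k + be * Lr d1 k)).
      pose proof (pow2_ge_0 (d2 k - a * P k * d1 k)).
      pose proof (pow2_ge_0 (be * Lr d1 k + a * P k * d1 k)).
      replace (3 * be ^ 2 * (Lr d1 k ^ 2 + Lr d2 k ^ 2)) with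
        (3 * (be * Lr d1 k) ^ 2 + 3 * (be * Lr d2 k) ^ 2) by ring.
      nra.
    + rewrite gsum_plus, !gsum_scal, !gsum_plus.
      pose proof (sumL2 K d1 Hd1). pose proof (sumL2 K d2 Hd2).
      replace (nsC K (csub u v)) with (gsum K (fun k => d1 k ^ 2) + gsum K (fun k => d2 k ^ 2))
        by (rewrite <- gsum_plus; apply gsum_ext; intros; unfold csub, d1, d2; auto).
      pose proof (pow2_ge_0 be).
      assert (0 <= gsum K (fun k => d1 k ^ 2)) by (apply gsum_nonneg; intros; apply pow2_ge_0).
      assert (0 <= gsum K (fun k => d2 k ^ 2)) by (apply gsum_nonneg; intros; apply pow2_ge_0).
      nra.
  - exists u. split; auto. intros k. specialize (H0 k). unfold F in H0.
    injection H0; intros H2 H1. fold be. split; lra.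
Qed.

Lemma sbp_neg K f : periodicR K f -> gsum K (fun k => Lr f k * f k) <= 0.
Proof.
  intros Hf. rewrite sbp by auto.
  assert (0 <= gsum K (fun k => Dr f k * Dr f k)) by (apply gsum_nonneg; intros; apply Rle_0_sqr).
  lra.
Qed.

Lemma wave_exists K dx a N0 V0 W : (0 < K)%nat -> 0 < dx -> 0 <= a ->
  periodicR K N0 -> periodicR K V0 -> periodicR K W ->
  exists N1 V1, periodicR K N1 /\ periodicR K V1 /\ WaveRel dx a N0 V0 W N1 V1.
Proof.
  intros HK Hdx Ha HN HV HW.
  set (be := a / dx ^ 2).
  set (ga := a * be).
  assert (Hga : 0 <= ga) by (unfold ga, be; apply Rmult_le_pos; auto; apply Rdiv_le_0_compat; auto; apply pow_lt; auto).
  set (G := fun j => 2 * V0 j + a * N0 j + a * W j).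
  assert (HG : periodicR K G) by (intros k; unfold G; rewrite HV, HN, HW; auto).
  set (b := fun k => N0 k + be * Lr G k).
  assert (Hb : periodicR K b) by (intros k; unfold b; rewrite HN, (per_Lr K G HG); auto).
  set (F := fun (x : Z -> C) k =>
     (fst (x k) - ga * Lr (fun j => fst (x j)) k - b k,
      snd (x k) - ga * Lr (fun j => snd (x j)) k) : C).
  destruct (zaran K HK F (2 + 36 * ga ^ 2)) as [x [Hx H0]].
  - pose proof (pow2_ge_0 ga); lra.
  - intros u Hu k. unfold F.
    rewrite (per_Lr K _ (per_fst K u Hu)), (per_Lr K _ (per_snd K u Hu)), Hu, Hb. auto.
  - intros u v Hu Hv.
    set (d1 := fun j => fst (u j) - fst (v j)).
    set (d2 := fun j => snd (u j) - snd (v j)).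
    assert (Hd1 : periodicR K d1) by (apply per_minus; [apply per_fst | apply per_fst]; auto).
    assert (Hd2 : periodicR K d2) by (apply per_minus; [apply per_snd | apply per_snd]; auto).
    assert (E : ipC K (csub (F u) (F v)) (csub u v) =
                nsC K (csub u v) + (- ga) * (gsum K (fun k => Lr d1 k * d1 k) +
                                         gsum K (fun k => Lr d2 k * d2 k))).
    { unfold ipC, nsC. rewrite <- gsum_plus, <- gsum_scal, <- gsum_plus.
      apply gsum_ext. intros k _. unfold csub, F, d1, d2; cbn [fst snd]. unfold Lr. ring. }
    rewrite E. pose proof (sbp_neg K d1 Hd1). pose proof (sbp_neg K d2 Hd2). nra.
  - intros u v Hu Hv.
    set (d1 := fun j => fst (u j) - fst (v j)).
    set (d2 := fun j => snd (u j) - snd (v j)).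
    assert (Hd1 : periodicR K d1) by (apply per_minus; [apply per_fst | apply per_fst]; auto).
    assert (Hd2 : periodicR K d2) by (apply per_minus; [apply per_snd | apply per_snd]; auto).
    apply Rle_trans with (gsum K (fun k => 2 * (d1 k ^ 2 + d2 k ^ 2)
                                      + (2 * ga ^ 2) * (Lr d1 k ^ 2 + Lr d2 k ^ 2))).
    + apply gsum_le. intros k _. unfold csub, F; cbn [fst snd].
      replace (fst (u k) - ga * Lr (fun j => fst (u j)) k - b k -
               (fst (v k) - ga * Lr (fun j => fst (v j)) k - b k))
        with (d1 k - ga * Lr d1 k) by (unfold d1, Lr; ring).
      replace (snd (u k) - ga * Lr (fun j => snd (u j)) k -
               (snd (v k) - ga * Lr (fun j => snd (v j)) k))
        with (d2 k - ga * Lr d2 k) by (unfold d2, Lr; ring).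
      pose proof (pow2_ge_0 (d1 k + ga * Lr d1 k)).
      pose proof (pow2_ge_0 (d2 k + ga * Lr d2 k)).
      replace (2 * ga ^ 2 * (Lr d1 k ^ 2 + Lr d2 k ^ 2)) with
        (2 * (ga * Lr d1 k) ^ 2 + 2 * (ga * Lr d2 k) ^ 2) by ring.
      nra.
    + rewrite gsum_plus, !gsum_scal, !gsum_plus.
      pose proof (sumL2 K d1 Hd1). pose proof (sumL2 K d2 Hd2).
      replace (nsC K (csub u v)) with (gsum K (fun k => d1 k ^ 2) + gsum K (fun k => d2 k ^ 2))
        by (rewrite <- gsum_plus; apply gsum_ext; intros; unfold csub, d1, d2; auto).
      pose proof (pow2_ge_0 ga).
      assert (0 <= gsum K (fun k => d1 k ^ 2)) by (apply gsum_nonneg; intros; apply pow2_ge_0).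
      assert (0 <= gsum K (fun k => d2 k ^ 2)) by (apply gsum_nonneg; intros; apply pow2_ge_0).
      nra.
  - set (N1 := fun k => fst (x k)).
    set (V1 := fun k => V0 k + a * (N1 k + N0 k) + a * W k).
    assert (HN1 : periodicR K N1) by (apply per_fst; auto).
    exists N1, V1. split; auto. split.
    + intros k; unfold V1; rewrite HV, HN1, HN, HW; auto.
    + intros k. split; [|unfold V1; ring].
      specialize (H0 k). unfold F in H0. injection H0; intros _ H1.
      fold N1 in H1.
      replace (Lr (fun j => V1 j + V0 j) k) with (Lr G k + a * Lr N1 k) by (unfold V1, G, Lr; ring).
      unfold b in H1. unfold ga in H1. 
      change (fst (x k)) with (N1 k) in H1. replace (a / dx ^ 2) with be by auto.
      replace (be * (Lr G k + a * Lr N1 k)) with (a * be * Lr N1 k + be * Lr G k) by ring. lra.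
Qed.

Lemma mass_cons K dx a E0 P u : periodicC K E0 -> periodicC K u ->
  SchrRel dx a E0 P u -> nsC K u = nsC K E0.
Proof.
  intros HE Hu H.
  set (s1 := fun j => fst (u j) + fst (E0 j)).
  set (s2 := fun j => snd (u j) + snd (E0 j)).
  assert (Hs1 : periodicR K s1) by (apply per_plus; [apply per_fst | apply per_fst]; auto).
  assert (Hs2 : periodicR K s2) by (apply per_plus; [apply per_snd | apply per_snd]; auto).
  assert (E : nsC K u + (-1) * nsC K E0 =
     (a / dx ^ 2) * (gsum K (fun k => Lr s1 k * s2 k) + (-1) * gsum K (fun k => Lr s2 k * s1 k))).
  { unfold nsC. rewrite <- (gsum_scal K (-1)), <- (gsum_scal K (-1)), <- !gsum_plus, <- gsum_scal.
    apply gsum_ext. intros k _. destruct (H k) as [H1 H2].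
    replace (fst (u k) ^ 2 + snd (u k) ^ 2 + -1 * (fst (E0 k) ^ 2 + snd (E0 k) ^ 2))
      with ((fst (u k) - fst (E0 k)) * s1 k + (snd (u k) - snd (E0 k)) * s2 k)
      by (unfold s1, s2; ring).
    rewrite H1, H2. fold s1 s2. unfold s1, s2. ring. }
  rewrite (sbp_sym K s1 s2) in E by auto. lra.
Qed.

Definition gf (R2 : R) (z : C) : R := Rmin (Cmod z) (sqrt R2) ^ 2.
Definition Wf (R2 : R) (E0 u : Z -> C) : Z -> R := fun k => gf R2 (u k) + Cmod (E0 k) ^ 2.

Lemma Cmod_sq z : Cmod z ^ 2 = fst z ^ 2 + snd z ^ 2.
Proof. unfold Cmod. rewrite pow2_sqrt; auto. pose proof (pow2_ge_0 (fst z)); pose proof (pow2_ge_0 (snd z)); lra. Qed.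

Lemma Cmod_rev z z' : Rabs (Cmod z - Cmod z') <= Cmod ((fst z - fst z', snd z - snd z')).
Proof.
  assert (A : Cmod z <= Cmod ((fst z - fst z', snd z - snd z')) + Cmod z').
  { rewrite <- (Cmod_triangle). right. f_equal. destruct z, z'; unfold Cplus; simpl; f_equal; ring. }
  assert (B : Cmod z' <= Cmod ((fst z - fst z', snd z - snd z')) + Cmod z).
  { replace (Cmod ((fst z - fst z', snd z - snd z'))) with (Cmod ((fst z' - fst z, snd z' - snd z))).
    rewrite <- (Cmod_triangle). right. f_equal. destruct z, z'; unfold Cplus; simpl; f_equal; ring.
    unfold Cmod; simpl. f_equal. ring. }
  unfold Rabs; destruct (Rcase_abs _); lra.
Qed.

Lemma Rmin_lip x y c : Rabs (Rmin x c - Rmin y c) <= Rabs (x - y).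
Proof.
  unfold Rmin; destruct (Rle_dec x c), (Rle_dec y c); unfold Rabs;
  repeat destruct (Rcase_abs _); lra.
Qed.

Lemma gf_lip R2 z z' : 0 <= R2 ->
  (gf R2 z - gf R2 z') ^ 2 <= 4 * R2 * ((fst z - fst z') ^ 2 + (snd z - snd z') ^ 2).
Proof.
  intros HR. unfold gf.
  set (m := Rmin (Cmod z) (sqrt R2)). set (m' := Rmin (Cmod z') (sqrt R2)).
  assert (Hm : 0 <= m <= sqrt R2).
  { split. apply Rmin_glb. apply Cmod_ge_0. apply sqrt_pos. apply Rmin_r. }
  assert (Hm' : 0 <= m' <= sqrt R2).
  { split. apply Rmin_glb. apply Cmod_ge_0. apply sqrt_pos. apply Rmin_r. }
  assert (H1 : (m - m') ^ 2 <= (fst z - fst z') ^ 2 + (snd z - snd z') ^ 2).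
  { assert (Ec : Cmod (fst z - fst z', snd z - snd z') ^ 2 = (fst z - fst z') ^ 2 + (snd z - snd z') ^ 2)
      by (rewrite Cmod_sq; reflexivity).
    rewrite <- Ec. apply abs_le_sq.
    eapply Rle_trans. apply Rmin_lip. apply Cmod_rev. }
  assert (H2 : (m + m') ^ 2 <= 4 * R2).
  { replace (4 * R2) with ((2 * sqrt R2) ^ 2) by (rewrite Rpow_mult_distr, pow2_sqrt; auto; ring).
    apply abs_le_sq. rewrite Rabs_pos_eq; lra. }
  replace ((m ^ 2 - m' ^ 2) ^ 2) with ((m - m') ^ 2 * (m + m') ^ 2) by ring.
  pose proof (pow2_ge_0 (m - m')). pose proof (pow2_ge_0 (m + m')).
  rewrite Rmult_comm. apply Rmult_le_compat; auto.
Qed.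

Lemma gf_eq R2 z : 0 <= R2 -> fst z ^ 2 + snd z ^ 2 <= R2 -> gf R2 z = fst z ^ 2 + snd z ^ 2.
Proof.
  intros HR H. unfold gf. rewrite Rmin_left. apply Cmod_sq.
  unfold Cmod. apply sqrt_le_1_alt. auto.
Qed.

Lemma per_Wf K R2 E0 u : periodicC K E0 -> periodicC K u -> periodicR K (Wf R2 E0 u).
Proof. intros HE Hu k; unfold Wf; rewrite HE, Hu; auto. Qed.

Lemma wave_contr K dx a R2 E0 N0 V0 u u' N1 V1 N1' V1' :
  (0 < K)%nat -> 0 < dx -> 0 <= a -> 0 <= R2 ->
  periodicC K E0 -> periodicC K u -> periodicC K u' ->
  periodicR K N1 -> periodicR K V1 -> periodicR K N1' -> periodicR K V1' ->
  WaveRel dx a N0 V0 (Wf R2 E0 u) N1 V1 -> WaveRel dx a N0 V0 (Wf R2 E0 u') N1' V1' ->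
  gsum K (fun k => (N1 k - N1' k) ^ 2) <= 4 * (a * (a / dx ^ 2)) * R2 * nsC K (csub u u').
Proof.
  intros HK Hdx Ha HR HE Hu Hu' HN1 HV1 HN1' HV1' HW HW'.
  set (be := a / dx ^ 2).
  assert (Hbe : 0 <= be) by (unfold be; apply Rdiv_le_0_compat; auto; apply pow_lt; auto).
  set (n := fun k => N1 k - N1' k).
  set (v := fun k => V1 k - V1' k).
  set (om := fun k => Wf R2 E0 u k - Wf R2 E0 u' k).
  assert (Hn : periodicR K n) by (apply per_minus; auto).
  assert (Hv : periodicR K v) by (apply per_minus; auto).
  assert (Hom : periodicR K om) by (apply per_minus; apply per_Wf; auto).
  assert (En : forall k, n k = be * Lr v k).
  { intros k. destruct (HW k) as [A1 _]; destruct (HW' k) as [B1 _].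
    replace (be * Lr v k) with (be * Lr (fun j => V1 j + V0 j) k - be * Lr (fun j => V1' j + V0 j) k)
      by (unfold v, Lr; ring).
    unfold n. fold be in A1, B1. lra. }
  assert (Ev : forall k, v k = a * n k + a * om k).
  { intros k. destruct (HW k) as [_ A2]; destruct (HW' k) as [_ B2].
    unfold v, n, om. lra. }
  assert (S1 : gsum K (fun k => n k ^ 2) = - (be * a) * gsum K (fun k => Dr n k ^ 2 + Dr om k * Dr n k)).
  { transitivity (be * gsum K (fun k => Lr v k * n k)).
    { rewrite <- gsum_scal. apply gsum_ext; intros k _. replace (n k ^ 2) with (n k * n k) by ring. rewrite (En k) at 1. ring. }
    rewrite sbp by auto.
    replace (- (be * a) * gsum K (fun k => Dr n k ^ 2 + Dr om k * Dr n k))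
      with (be * - gsum K (fun k => a * (Dr n k ^ 2 + Dr om k * Dr n k)))
      by (rewrite gsum_scal; ring).
    f_equal. f_equal. apply gsum_ext; intros k _. unfold Dr. rewrite !Ev. ring. }
  assert (S2 : - gsum K (fun k => Dr n k ^ 2 + Dr om k * Dr n k) <= gsum K (fun k => Dr om k ^ 2) / 4).
  { unfold Rdiv. rewrite Rmult_comm, <- gsum_scal.
    replace (- gsum K (fun k => Dr n k ^ 2 + Dr om k * Dr n k)) with
      (gsum K (fun k => -1 * (Dr n k ^ 2 + Dr om k * Dr n k))) by (rewrite gsum_scal; ring).
    apply gsum_le; intros k _. pose proof (pow2_ge_0 (Dr n k + Dr om k / 2)). nra. }
  assert (S3 : gsum K (fun k => om k ^ 2) <= 4 * R2 * nsC K (csub u u')).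
  { unfold nsC. rewrite <- gsum_scal. apply gsum_le; intros k _. unfold om, Wf, csub; cbn [fst snd].
    replace (gf R2 (u k) + Cmod (E0 k) ^ 2 - (gf R2 (u' k) + Cmod (E0 k) ^ 2))
      with (gf R2 (u k) - gf R2 (u' k)) by ring.
    apply gf_lip; auto. }
  pose proof (sumD2 K om Hom).
  assert (0 <= be * a) by (apply Rmult_le_pos; auto).
  assert (gsum K (fun k => n k ^ 2) <= be * a * (gsum K (fun k => Dr om k ^ 2) / 4)).
  { rewrite S1. replace (- (be * a) * gsum K (fun k => Dr n k ^ 2 + Dr om k * Dr n k)) with
      (be * a * (- gsum K (fun k => Dr n k ^ 2 + Dr om k * Dr n k))) by ring.
    apply Rmult_le_compat_l; auto. }
  replace (a * (a / dx ^ 2)) with (be * a) by (unfold be; ring).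
  apply Rle_trans with (be * a * (gsum K (fun k => Dr om k ^ 2) / 4)); auto.
  apply Rle_trans with (be * a * (4 * R2 * nsC K (csub u u'))); [| right; ring].
  apply Rmult_le_compat_l; auto. lra.
Qed.

Lemma schr_contr K dx a R2 E0 N0 N1 N1' uh uh' :
  periodicC K E0 -> periodicC K uh -> periodicC K uh' ->
  (forall k, fst (E0 k) ^ 2 + snd (E0 k) ^ 2 <= R2) ->
  (forall k, fst (uh' k) ^ 2 + snd (uh' k) ^ 2 <= R2) ->
  SchrRel dx a E0 (fun k => (N1 k + N0 k) / 2) uh ->
  SchrRel dx a E0 (fun k => (N1' k + N0 k) / 2) uh' ->
  nsC K (csub uh uh') <= a ^ 2 * R2 * gsum K (fun k => (N1 k - N1' k) ^ 2).
Proof.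
  intros HE Hu Hu' HRE HRu HS HS'.
  set (be := a / dx ^ 2).
  set (e1 := fun k => fst (uh k) - fst (uh' k)).
  set (e2 := fun k => snd (uh k) - snd (uh' k)).
  set (s1 := fun k => fst (uh' k) + fst (E0 k)).
  set (s2 := fun k => snd (uh' k) + snd (E0 k)).
  set (n := fun k => N1 k - N1' k).
  set (P := fun k => (N1 k + N0 k) / 2).
  assert (He1p : periodicR K e1) by (apply per_minus; [apply per_fst | apply per_fst]; auto).
  assert (He2p : periodicR K e2) by (apply per_minus; [apply per_snd | apply per_snd]; auto).
  assert (He : forall k, e1 k = - (be * Lr e2 k) + a * P k * e2 k + a * (n k / 2) * s2 k /\
                         e2 k = be * Lr e1 k - a * P k * e1 k - a * (n k / 2) * s1 k).
  { intros k. destruct (HS k) as [A1 A2]. destruct (HS' k) as [B1 B2].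
    fold be in A1, A2, B1, B2.
    replace (be * Lr e2 k) with (be * Lr (fun j => snd (uh j) + snd (E0 j)) k
                                 - be * Lr (fun j => snd (uh' j) + snd (E0 j)) k)
      by (unfold e2, Lr; ring).
    replace (be * Lr e1 k) with (be * Lr (fun j => fst (uh j) + fst (E0 j)) k
                                 - be * Lr (fun j => fst (uh' j) + fst (E0 j)) k)
      by (unfold e1, Lr; ring).
    unfold e1, e2, s1, s2, n, P. split; lra. }
  assert (Id : nsC K (csub uh uh') =
     be * (gsum K (fun k => Lr e1 k * e2 k) + (-1) * gsum K (fun k => Lr e2 k * e1 k))
     + gsum K (fun k => a * (n k / 2) * (s2 k * e1 k - s1 k * e2 k))).
  { unfold nsC. rewrite <- (gsum_scal K (-1)), <- gsum_plus, <- gsum_scal, <- gsum_plus.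
    apply gsum_ext; intros k _. unfold csub; cbn [fst snd]. fold (e1 k) (e2 k).
    destruct (He k) as [X1 X2].
    replace (e1 k ^ 2 + e2 k ^ 2) with (e1 k * e1 k + e2 k * e2 k) by ring.
    rewrite X1 at 1. rewrite X2 at 2. ring. }
  rewrite (sbp_sym K e1 e2) in Id by auto.
  replace (be * (gsum K (fun k => Lr e2 k * e1 k) + -1 * gsum K (fun k => Lr e2 k * e1 k))) with 0 in Id by ring.
  assert (Bd : gsum K (fun k => a * (n k / 2) * (s2 k * e1 k - s1 k * e2 k)) <=
               gsum K (fun k => (a ^ 2 * R2 * n k ^ 2 + (e1 k ^ 2 + e2 k ^ 2)) / 2)).
  { apply gsum_le; intros k _.
    set (t := a * (n k / 2)).
    assert (Hs : s1 k ^ 2 + s2 k ^ 2 <= 4 * R2).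
    { specialize (HRE k); specialize (HRu k). unfold s1, s2.
      pose proof (pow2_ge_0 (fst (uh' k) - fst (E0 k))).
      pose proof (pow2_ge_0 (snd (uh' k) - snd (E0 k))). nra. }
    pose proof (pow2_ge_0 (t * s2 k - e1 k)).
    pose proof (pow2_ge_0 (t * s1 k + e2 k)).
    assert (t ^ 2 * (s1 k ^ 2 + s2 k ^ 2) <= t ^ 2 * (4 * R2)) by (apply Rmult_le_compat_l; auto; apply pow2_ge_0).
    replace (a ^ 2 * R2 * n k ^ 2) with (t ^ 2 * (4 * R2)) by (unfold t; field).
    nra. }
  rewrite (gsum_ext K (fun k => (a ^ 2 * R2 * n k ^ 2 + (e1 k ^ 2 + e2 k ^ 2)) / 2)
     (fun k => (/ 2 * (a ^ 2 * R2)) * n k ^ 2 + / 2 * (e1 k ^ 2 + e2 k ^ 2))) in Bd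
     by (intros; field).
  rewrite gsum_plus, !gsum_scal in Bd.
  replace (gsum K (fun k => e1 k ^ 2 + e2 k ^ 2)) with (nsC K (csub uh uh')) in Bd
    by (apply gsum_ext; intros; unfold csub; auto).
  change (gsum K (fun k => (N1 k - N1' k) ^ 2)) with (gsum K (fun k => n k ^ 2)).
  lra.
Qed.

Definition StepK (dx dt : R) (E0 E1 : Z -> C) (N0 N1 V0 V1 : Z -> R) (k : Z) : Prop :=
  let muE := fun j => ((E1 j + E0 j) / RtoC 2)%C in
  let muN := fun j => ((N1 j + N0 j) / 2)%R in
  let muV := fun j => ((V1 j + V0 j) / 2)%R in
  (Ci * ((E1 k - E0 k) / RtoC dt) = - dx2C dx muE k + RtoC (muN k) * muE k)%C /\
  ((N1 k - N0 k) / dt = dx2R dx muV k)%R /\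
  ((V1 k - V0 k) / dt = muN k + (Cmod (E1 k) ^ 2 + Cmod (E0 k) ^ 2) / 2)%R.

Lemma step_iff dx dt E N V m k :
  dvdm_step dx dt E N V m k <-> StepK dx dt (E m) (E (S m)) (N m) (N (S m)) (V m) (V (S m)) k.
Proof. reflexivity. Qed.

Lemma C_eq_iff (z w : C) : z = w <-> fst z = fst w /\ snd z = snd w.
Proof. destruct z, w; simpl; split; [intros H; injection H; auto | intros [-> ->]; auto]. Qed.

Lemma stepC_iff dx dt (E0 E1 : Z -> C) (P : Z -> R) k : 0 < dx -> 0 < dt ->
  (Ci * ((E1 k - E0 k) / RtoC dt) =
     - dx2C dx (fun j => ((E1 j + E0 j) / RtoC 2)%C) k
     + RtoC (P k) * ((E1 k + E0 k) / RtoC 2))%C <->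
  (fst (E1 k) - fst (E0 k) = - ((dt / 2) / dx ^ 2) * Lr (fun j => snd (E1 j) + snd (E0 j)) k
                             + (dt / 2) * P k * (snd (E1 k) + snd (E0 k)) /\
   snd (E1 k) - snd (E0 k) = ((dt / 2) / dx ^ 2) * Lr (fun j => fst (E1 j) + fst (E0 j)) k
                             - (dt / 2) * P k * (fst (E1 k) + fst (E0 k))).
Proof.
  intros Hdx Hdt. rewrite C_eq_iff.
  assert (H2 : dx ^ 2 <> 0) by (apply pow_nonzero; lra).
  assert (X1 : fst (Ci * ((E1 k - E0 k) / RtoC dt))%C = - (snd (E1 k) - snd (E0 k)) / dt).
  { unfold Ci, RtoC, Cdiv, Cinv, Cmult, Cminus, Cplus, Copp; cbn [fst snd]. field; lra. }
  assert (X2 : snd (Ci * ((E1 k - E0 k) / RtoC dt))%C = (fst (E1 k) - fst (E0 k)) / dt).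
  { unfold Ci, RtoC, Cdiv, Cinv, Cmult, Cminus, Cplus, Copp; cbn [fst snd]. field; lra. }
  assert (Y1 : fst (- dx2C dx (fun j => ((E1 j + E0 j) / RtoC 2)%C) k
     + RtoC (P k) * ((E1 k + E0 k) / RtoC 2))%C =
     - (Lr (fun j => fst (E1 j) + fst (E0 j)) k * / dx ^ 2) / 2 + P k * (fst (E1 k) + fst (E0 k)) / 2).
  { unfold dx2C, Lr, RtoC, Cdiv, Cinv, Cmult, Cminus, Cplus, Copp; cbn [fst snd]. field; lra. }
  assert (Y2 : snd (- dx2C dx (fun j => ((E1 j + E0 j) / RtoC 2)%C) k
     + RtoC (P k) * ((E1 k + E0 k) / RtoC 2))%C =
     - (Lr (fun j => snd (E1 j) + snd (E0 j)) k * / dx ^ 2) / 2 + P k * (snd (E1 k) + snd (E0 k)) / 2).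
  { unfold dx2C, Lr, RtoC, Cdiv, Cinv, Cmult, Cminus, Cplus, Copp; cbn [fst snd]. field; lra. }
  rewrite X1, X2, Y1, Y2.
  set (L1 := Lr (fun j => fst (E1 j) + fst (E0 j)) k).
  set (L2 := Lr (fun j => snd (E1 j) + snd (E0 j)) k).
  unfold Rdiv.
  split; intros [A B]; split.
  - apply (Rmult_eq_compat_r dt) in B. rewrite Rmult_assoc, Rinv_l in B by lra. lra.
  - apply (Rmult_eq_compat_r dt) in A. rewrite Rmult_assoc, Rinv_l in A by lra. lra.
  - apply (Rmult_eq_reg_r dt); [|lra]. rewrite Rmult_assoc, Rinv_l by lra. lra.
  - apply (Rmult_eq_reg_r dt); [|lra]. rewrite Rmult_assoc, Rinv_l by lra. lra.
Qed.

Lemma stepW_iff dx dt (N0 N1 V0 V1 : Z -> R) W k : 0 < dx -> 0 < dt ->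
  ((N1 k - N0 k) / dt = dx2R dx (fun j => (V1 j + V0 j) / 2) k /\
   (V1 k - V0 k) / dt = (N1 k + N0 k) / 2 + W / 2) <->
  (N1 k - N0 k = (dt / 2) / dx ^ 2 * Lr (fun j => V1 j + V0 j) k /\
   V1 k - V0 k = dt / 2 * (N1 k + N0 k) + dt / 2 * W).
Proof.
  intros Hdx Hdt.
  assert (H2 : dx ^ 2 <> 0) by (apply pow_nonzero; lra).
  assert (Y : dx2R dx (fun j => (V1 j + V0 j) / 2) k = Lr (fun j => V1 j + V0 j) k * / dx ^ 2 / 2).
  { unfold dx2R, Lr. field; lra. }
  rewrite Y. set (L := Lr (fun j => V1 j + V0 j) k). unfold Rdiv.
  split; intros [A B]; split.
  - apply (Rmult_eq_compat_r dt) in A. rewrite Rmult_assoc, Rinv_l in A by lra. lra.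
  - apply (Rmult_eq_compat_r dt) in B. rewrite Rmult_assoc, Rinv_l in B by lra. lra.
  - apply (Rmult_eq_reg_r dt); [|lra]. rewrite Rmult_assoc, Rinv_l by lra. lra.
  - apply (Rmult_eq_reg_r dt); [|lra]. rewrite Rmult_assoc, Rinv_l by lra. lra.
Qed.

Lemma step_equiv dx dt E0 E1 N0 N1 V0 V1 : 0 < dx -> 0 < dt ->
  (forall k, StepK dx dt E0 E1 N0 N1 V0 V1 k) <->
  SchrRel dx (dt / 2) E0 (fun k => (N1 k + N0 k) / 2) E1 /\
  WaveRel dx (dt / 2) N0 V0 (fun k => Cmod (E1 k) ^ 2 + Cmod (E0 k) ^ 2) N1 V1.
Proof.
  intros Hdx Hdt. unfold StepK, SchrRel, WaveRel. split.
  - intros H. split; intros k; destruct (H k) as [A [B C]].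
    + apply (stepC_iff dx dt E0 E1 (fun k => (N1 k + N0 k) / 2) k Hdx Hdt). auto.
    + apply (stepW_iff dx dt N0 N1 V0 V1 (Cmod (E1 k) ^ 2 + Cmod (E0 k) ^ 2) k Hdx Hdt). auto.
  - intros [HS HW] k. split; [|apply (stepW_iff dx dt N0 N1 V0 V1 (Cmod (E1 k) ^ 2 + Cmod (E0 k) ^ 2) k Hdx Hdt); auto].
    apply (stepC_iff dx dt E0 E1 (fun k => (N1 k + N0 k) / 2) k Hdx Hdt). auto.
Qed.

Lemma WaveRel_ext dx a N0 V0 W W' N1 V1 :
  WaveRel dx a N0 V0 W N1 V1 -> (forall k, W k = W' k) -> WaveRel dx a N0 V0 W' N1 V1.
Proof. intros H E k. rewrite <- E. apply H. Qed.

Definition qfac (dx dt R2 : R) : R := (dt / 2) ^ 2 * R2 * (4 * ((dt / 2) * ((dt / 2) / dx ^ 2)) * R2).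

Lemma Wf_eq K R2 E0 u : (0 < K)%nat -> 0 <= R2 -> periodicC K u -> nsC K u <= R2 ->
  forall k, Wf R2 E0 u k = Cmod (u k) ^ 2 + Cmod (E0 k) ^ 2.
Proof.
  intros HK HR Hu Hn k. unfold Wf. rewrite gf_eq, !Cmod_sq; auto.
  pose proof (comp_bound K u HK Hu k); lra.
Qed.

Lemma step_exists K dx dt E0 N0 V0 : (0 < K)%nat -> 0 < dx -> 0 < dt ->
  periodicC K E0 -> periodicR K N0 -> periodicR K V0 -> qfac dx dt (nsC K E0) < 1 ->
  exists E1 N1 V1, periodicC K E1 /\ periodicR K N1 /\ periodicR K V1 /\
     forall k, StepK dx dt E0 E1 N0 N1 V0 V1 k.
Proof.
  intros HK Hdx Hdt HE HN HV Hq.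
  set (a := dt / 2). set (R2 := nsC K E0).
  assert (Ha : 0 <= a) by (unfold a; lra).
  assert (HR2 : 0 <= R2) by apply nsC_nonneg.
  assert (HRE : forall k, fst (E0 k) ^ 2 + snd (E0 k) ^ 2 <= R2) by (intros; apply comp_bound; auto).
  assert (HWex : forall u : Z -> C, exists NV : (Z -> R) * (Z -> R), periodicC K u ->
     periodicR K (fst NV) /\ periodicR K (snd NV) /\ WaveRel dx a N0 V0 (Wf R2 E0 u) (fst NV) (snd NV)).
  { intros u. destruct (classic (periodicC K u)) as [Hu|Hu].
    - destruct (wave_exists K dx a N0 V0 (Wf R2 E0 u)) as [N1 [V1 H]]; auto.
      apply per_Wf; auto. exists (N1, V1). intros _; exact H.
    - exists (N0, V0). intros; contradiction. }
  assert (HSex : forall P : Z -> R, exists uh : Z -> C, periodicR K P ->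
     periodicC K uh /\ SchrRel dx a E0 P uh).
  { intros P. destruct (classic (periodicR K P)) as [Hp|Hp].
    - destruct (schr_exists K dx a E0 P) as [uh H]; auto. exists uh; intros _; exact H.
    - exists E0. intros; contradiction. }
  set (wv := fun u => proj1_sig (constructive_indefinite_description _ (HWex u))).
  assert (Hwv : forall u, periodicC K u -> periodicR K (fst (wv u)) /\ periodicR K (snd (wv u)) /\
                  WaveRel dx a N0 V0 (Wf R2 E0 u) (fst (wv u)) (snd (wv u))).
  { intros u. unfold wv. destruct (constructive_indefinite_description _ (HWex u)); auto. }
  set (sc := fun P => proj1_sig (constructive_indefinite_description _ (HSex P))).
  assert (Hsc : forall P, periodicR K P -> periodicC K (sc P) /\ SchrRel dx a E0 P (sc P)).
  { intros P. unfold sc. destruct (constructive_indefinite_description _ (HSex P)); auto. }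
  set (PP := fun u k => (fst (wv u) k + N0 k) / 2).
  assert (HPP : forall u, periodicC K u -> periodicR K (PP u)).
  { intros u Hu k. unfold PP. destruct (Hwv u Hu) as [A _]. rewrite A, HN; auto. }
  set (Phi := fun u => sc (PP u)).
  assert (HPhi : forall u, periodicC K u -> periodicC K (Phi u) /\ SchrRel dx a E0 (PP u) (Phi u))
    by (intros; apply Hsc; auto).
  assert (HPhiR : forall u, periodicC K u -> nsC K (Phi u) = R2).
  { intros u Hu. destruct (HPhi u Hu) as [A B]. eapply mass_cons; eauto. }
  assert (Hq0 : 0 <= qfac dx dt R2).
  { unfold qfac. assert (0 <= dt / 2 / dx ^ 2) by (apply Rdiv_le_0_compat; [lra| apply pow_lt; lra]).
    pose proof (pow2_ge_0 (dt / 2)).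
    assert (0 <= 4 * (dt / 2 * (dt / 2 / dx ^ 2))) by (apply Rmult_le_pos; [lra| apply Rmult_le_pos; lra]).
    apply Rmult_le_pos; apply Rmult_le_pos; auto. }
  destruct (banach K HK Phi (sqrt (qfac dx dt R2))) as [u [Hu Hfix]].
  - split. apply sqrt_pos. apply (Rlt_le_trans _ (sqrt 1)); [|rewrite sqrt_1; lra].
    apply sqrt_lt_1_alt. split; auto.
  - intros u Hu; apply HPhi; auto.
  - intros u v Hu Hv. rewrite pow2_sqrt by auto.
    destruct (Hwv u Hu) as [Au [Bu Cu]]. destruct (Hwv v Hv) as [Av [Bv Cv]].
    destruct (HPhi u Hu) as [Du Eu]. destruct (HPhi v Hv) as [Dv Ev].
    pose proof (wave_contr K dx a R2 E0 N0 V0 u v _ _ _ _ HK Hdx Ha HR2 HE Hu Hv Au Bu Av Bv Cu Cv) as W1.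
    assert (HRv : forall k, fst (Phi v k) ^ 2 + snd (Phi v k) ^ 2 <= R2).
    { intros k. rewrite <- (HPhiR v Hv). apply comp_bound; auto. }
    pose proof (schr_contr K dx a R2 E0 N0 (fst (wv u)) (fst (wv v)) (Phi u) (Phi v) HE Du Dv HRE HRv Eu Ev) as S1.
    unfold qfac. fold a.
    assert (0 <= a ^ 2 * R2) by (apply Rmult_le_pos; auto; apply pow2_ge_0).
    eapply Rle_trans. apply S1.
    replace (a ^ 2 * R2 * (4 * (a * (a / dx ^ 2)) * R2) * nsC K (csub u v)) with
      (a ^ 2 * R2 * (4 * (a * (a / dx ^ 2)) * R2 * nsC K (csub u v))) by ring.
    apply Rmult_le_compat_l; auto.
  - assert (Efix : Phi u = u) by (apply functional_extensionality; auto).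
    destruct (Hwv u Hu) as [A [B C]].
    destruct (HPhi u Hu) as [D F]. rewrite Efix in F.
    assert (HuR : nsC K u <= R2) by (rewrite <- Efix, HPhiR; auto; lra).
    exists u, (fst (wv u)), (snd (wv u)). split; auto. split; auto. split; auto.
    apply step_equiv; auto. split.
    + exact F.
    + apply (WaveRel_ext _ _ _ _ _ _ _ _ C). apply (Wf_eq K); auto.
Qed.

Lemma sq_zero x : x ^ 2 <= 0 -> x = 0.
Proof.
  intros H. destruct (Req_dec x 0); auto. exfalso.
  pose proof (Rsqr_pos_lt x H0). unfold Rsqr in H1.
  replace (x ^ 2) with (x * x) in H by ring. lra.
Qed.

Lemma step_unique K dx dt E0 N0 V0 E1 N1 V1 E1' N1' V1' : (0 < K)%nat -> 0 < dx -> 0 < dt ->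
  periodicC K E0 -> periodicR K N0 -> periodicR K V0 -> qfac dx dt (nsC K E0) < 1 ->
  periodicC K E1 -> periodicR K N1 -> periodicR K V1 ->
  periodicC K E1' -> periodicR K N1' -> periodicR K V1' ->
  (forall k, StepK dx dt E0 E1 N0 N1 V0 V1 k) ->
  (forall k, StepK dx dt E0 E1' N0 N1' V0 V1' k) ->
  forall k, E1 k = E1' k /\ N1 k = N1' k /\ V1 k = V1' k.
Proof.
  intros HK Hdx Hdt HE HN HV Hq HE1 HN1 HV1 HE1' HN1' HV1' H H'.
  set (a := dt / 2). set (R2 := nsC K E0).
  assert (Ha : 0 <= a) by (unfold a; lra).
  assert (HR2 : 0 <= R2) by apply nsC_nonneg.
  assert (HRE : forall k, fst (E0 k) ^ 2 + snd (E0 k) ^ 2 <= R2) by (intros; apply comp_bound; auto).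
  apply step_equiv in H; auto. apply step_equiv in H'; auto.
  destruct H as [S W]. destruct H' as [S' W'].
  assert (M : nsC K E1 = R2) by (eapply mass_cons; eauto).
  assert (M' : nsC K E1' = R2) by (eapply mass_cons; eauto).
  assert (W2 : WaveRel dx a N0 V0 (Wf R2 E0 E1) N1 V1).
  { apply (WaveRel_ext _ _ _ _ _ _ _ _ W). intros k. symmetry. apply (Wf_eq K); auto. lra. }
  assert (W2' : WaveRel dx a N0 V0 (Wf R2 E0 E1') N1' V1').
  { apply (WaveRel_ext _ _ _ _ _ _ _ _ W'). intros k. symmetry. apply (Wf_eq K); auto. lra. }
  pose proof (wave_contr K dx a R2 E0 N0 V0 E1 E1' _ _ _ _ HK Hdx Ha HR2 HE HE1 HE1' HN1 HV1 HN1' HV1' W2 W2') as C1.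
  assert (HRv : forall k, fst (E1' k) ^ 2 + snd (E1' k) ^ 2 <= R2).
  { intros k. rewrite <- M'. apply comp_bound; auto. }
  pose proof (schr_contr K dx a R2 E0 N0 N1 N1' E1 E1' HE HE1 HE1' HRE HRv S S') as C2.
  assert (Z1 : nsC K (csub E1 E1') = 0).
  { pose proof (nsC_nonneg K (csub E1 E1')).
    assert (0 <= a ^ 2 * R2) by (apply Rmult_le_pos; auto; apply pow2_ge_0).
    assert (nsC K (csub E1 E1') <= qfac dx dt R2 * nsC K (csub E1 E1')).
    { unfold qfac; fold a. eapply Rle_trans. apply C2.
      replace (a ^ 2 * R2 * (4 * (a * (a / dx ^ 2)) * R2) * nsC K (csub E1 E1')) with
        (a ^ 2 * R2 * (4 * (a * (a / dx ^ 2)) * R2 * nsC K (csub E1 E1'))) by ring.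
      apply Rmult_le_compat_l; auto. }
    assert (0 <= qfac dx dt R2).
    { unfold qfac. assert (0 <= dt / 2 / dx ^ 2) by (apply Rdiv_le_0_compat; [lra| apply pow_lt; lra]).
      pose proof (pow2_ge_0 (dt / 2)).
      assert (0 <= 4 * (dt / 2 * (dt / 2 / dx ^ 2))) by (apply Rmult_le_pos; [lra| apply Rmult_le_pos; lra]).
      apply Rmult_le_pos; apply Rmult_le_pos; auto. }
    assert (Hq' : 0 < 1 - qfac dx dt R2) by (unfold R2; lra).
    assert ((1 - qfac dx dt R2) * nsC K (csub E1 E1') <= 0) by lra.
    apply Rle_antisym; auto.
    apply (Rmult_le_reg_l (1 - qfac dx dt R2)); auto. lra. }
  assert (EE : forall k, E1 k = E1' k).
  { intros k. pose proof (comp_bound K _ HK (per_csub K _ _ HE1 HE1') k) as X.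
    rewrite Z1 in X. unfold csub in X; cbn [fst snd] in X.
    pose proof (pow2_ge_0 (fst (E1 k) - fst (E1' k))).
    pose proof (pow2_ge_0 (snd (E1 k) - snd (E1' k))).
    assert (fst (E1 k) - fst (E1' k) = 0) by (apply sq_zero; lra).
    assert (snd (E1 k) - snd (E1' k) = 0) by (apply sq_zero; lra).
    destruct (E1 k), (E1' k); cbn [fst snd] in *. f_equal; lra. }
  assert (EN : forall k, N1 k = N1' k).
  { intros k. rewrite Z1, Rmult_0_r in C1.
    pose proof (comp_boundR K (fun k => N1 k - N1' k) HK (per_minus K _ _ HN1 HN1') k) as X.
    cbv beta in X.
    assert (N1 k - N1' k = 0) by (apply sq_zero; lra).
    lra. }
  intros k. split; auto. split; auto.
  destruct (W k) as [_ A]. destruct (W' k) as [_ B].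
  rewrite (EE k), (EN k) in A. lra.
Qed.

Lemma q_bound dx dt r R2 : 0 < dx -> 0 < dt -> 0 <= R2 -> 0 < r ->
  dx * R2 <= r ^ 2 -> dt * r < dx -> qfac dx dt R2 < 1.
Proof.
  intros Hdx Hdt HR Hr H1 H2.
  assert (E : qfac dx dt R2 = (dt ^ 4 / (4 * dx ^ 4)) * (dx * R2) ^ 2) by (unfold qfac; field; lra).
  rewrite E.
  assert (0 <= dt ^ 4 / (4 * dx ^ 4)).
  { apply Rdiv_le_0_compat. apply pow_le; lra. assert (0 < dx ^ 4) by (apply pow_lt; lra). lra. }
  assert ((dx * R2) ^ 2 <= (r ^ 2) ^ 2).
  { apply pow_incr. split; auto. apply Rmult_le_pos; lra. }
  apply Rle_lt_trans with (dt ^ 4 / (4 * dx ^ 4) * (r ^ 2) ^ 2).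
  { apply Rmult_le_compat_l; auto. }
  set (t := dt * r / dx).
  assert (Ht : 0 < t < 1).
  { unfold t; split. apply Rdiv_lt_0_compat; [apply Rmult_lt_0_compat|]; lra. apply div_lt_l; lra. }
  replace (dt ^ 4 / (4 * dx ^ 4) * (r ^ 2) ^ 2) with ((t ^ 2) * (t ^ 2) / 4) by (unfold t; field; lra).
  assert (t ^ 2 < 1) by (simpl; nra).
  assert (0 <= t ^ 2) by apply pow2_ge_0.
  assert (t ^ 2 * t ^ 2 <= t ^ 2 * 1) by (apply Rmult_le_compat_l; lra).
  apply div_lt_l; lra.
Qed.

Lemma norm_bound K dx (v : Z -> C) r : 0 < dx -> 0 <= r -> norm2C K dx v <= r -> dx * nsC K v <= r ^ 2.
Proof.
  intros Hdx Hr H. unfold norm2C in H.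
  assert (E : gsum K (fun k => Cmod (v k) ^ 2 * dx) = dx * nsC K v).
  { unfold nsC. rewrite <- gsum_scal. apply gsum_ext; intros; rewrite Cmod_sq; ring. }
  rewrite E in H. rewrite <- (pow2_sqrt (dx * nsC K v)).
  apply pow_incr. split; auto. apply sqrt_pos.
  apply Rmult_le_pos; [lra| apply nsC_nonneg].
Qed.

Lemma sol_mono K dx dt E0 N0 V0 m m' Ed Nd Vd : (m' <= m)%nat ->
  dvdm_solution K dx dt E0 N0 V0 m Ed Nd Vd -> dvdm_solution K dx dt E0 N0 V0 m' Ed Nd Vd.
Proof.
  intros Hle [A [B C]]. split; [|split]; auto.
  intros j Hj; apply A; lia. intros j k Hj; apply C; lia.
Qed.

Lemma Lhat_nonneg L : 0 <= Lhat L.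
Proof.
  unfold Lhat. apply Rmult_le_pos. apply sqrt_pos.
  apply Rle_trans with (sqrt L). apply sqrt_pos. apply Rmax_l.
Qed.

Theorem theorem3p2 (L T : R) (E : R -> R -> C) (N V : R -> R -> R)
  (Cinf CV p r : R) :
  0 < L -> 0 < T ->
  zakharov_solution L T E N V ->
  0 < Cinf ->
  (* a priori bound: for all sufficiently small dx, every solution of the
     scheme (with the prescribed initial data) is bounded by Cinf *)
  (exists dx0 : R, 0 < dx0 /\
     forall (K M m : nat), (0 < K)%nat -> (0 < M)%nat -> (m <= M)%nat ->
     let dx := L / INR K in
     let dt := T / INR M in
     dx < dx0 ->
     forall V0 : Z -> R, periodicR K V0 ->
     (forall k : Z, Rabs (V0 k - V 0 (IZR k * dx)) <= CV * dx ^ 2) ->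
     forall (Ed : nat -> Z -> C) (Nd Vd : nat -> Z -> R),
     dvdm_solution K dx dt (fun k => E 0 (IZR k * dx)) (fun k => N 0 (IZR k * dx))
       V0 m Ed Nd Vd ->
     norm2C K dx (Ed m) <= Cinf /\
     norm2C K dx (dxpC dx (Ed m)) <= Cinf /\
     norminfC K (Ed m) <= Cinf /\
     norm2R K dx (Nd m) <= Cinf /\
     norm2R K dx (dxpR dx (Vd m)) <= Cinf) ->
  3 < p -> Cinf <= r ->
  exists delta : R, 0 < delta /\
    forall (K M : nat), (0 < K)%nat -> (0 < M)%nat ->
    let dx := L / INR K in
    let dt := T / INR M in
    dx < delta -> dt < delta ->
    dt < dx -> dt < dvdm_eps1 L dx p r -> dt < dvdm_eps2 L dx p r ->
    forall V0 : Z -> R, periodicR K V0 ->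
    (forall k : Z, Rabs (V0 k - V 0 (IZR k * dx)) <= CV * dx ^ 2) ->
    (exists (Ed : nat -> Z -> C) (Nd Vd : nat -> Z -> R),
       dvdm_solution K dx dt (fun k => E 0 (IZR k * dx)) (fun k => N 0 (IZR k * dx))
         V0 M Ed Nd Vd /\
       forall (Ed' : nat -> Z -> C) (Nd' Vd' : nat -> Z -> R),
       dvdm_solution K dx dt (fun k => E 0 (IZR k * dx)) (fun k => N 0 (IZR k * dx))
         V0 M Ed' Nd' Vd' ->
       forall (j : nat) (k : Z), (j <= M)%nat ->
         Ed' j k = Ed j k /\ Nd' j k = Nd j k /\ Vd' j k = Vd j k).
Proof.
  intros HL HT Hsol HCinf [dx0 [Hdx0 Hapr]] Hp Hr.
  exists dx0. split; auto.
  intros K M HK HM dx dt Hdxd Hdtd Hdtdx He1 He2 V0 HV0 HV0b.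
  assert (HKr : 0 < INR K) by (apply lt_0_INR; lia).
  assert (HMr : 0 < INR M) by (apply lt_0_INR; lia).
  assert (Hdx : 0 < dx) by (unfold dx; apply Rdiv_lt_0_compat; lra).
  assert (Hdt : 0 < dt) by (unfold dt; apply Rdiv_lt_0_compat; lra).
  assert (Hrp : 0 < r) by lra.
  set (E0g := fun k => E 0 (IZR k * dx)).
  set (N0g := fun k => N 0 (IZR k * dx)).
  assert (Hshift : forall k, IZR (k + Z.of_nat K) * dx = IZR k * dx + L).
  { intros k. rewrite plus_IZR, <- INR_IZR_INZ. unfold dx. field. lra. }
  destruct Hsol as [Et [Ex [Exx [Nt [Vt [Vx [Vxx [Hs _]]]]]]]].
  assert (HE0 : periodicC K E0g).
  { intros k. unfold E0g. rewrite Hshift. destruct (Hs 0 (IZR k * dx) ltac:(lra)) as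
      (_ & _ & _ & _ & _ & _ & _ & _ & _ & _ & _ & _ & A & _). auto. }
  assert (HN0 : periodicR K N0g).
  { intros k. unfold N0g. rewrite Hshift. destruct (Hs 0 (IZR k * dx) ltac:(lra)) as
      (_ & _ & _ & _ & _ & _ & _ & _ & _ & _ & _ & _ & _ & A & _). auto. }
  assert (Hdtr : dt * r < dx).
  { unfold dvdm_eps2 in He2.
    pose proof (Lhat_nonneg L). pose proof (sqrt_pos dx).
    set (D := 2 * p * Lhat L + 1 + (p + 1 / 2) * sqrt dx + (2 * p * Lhat L + 1 / 2) * dx) in He2.
    assert (HD : 1 <= D).
    { unfold D. assert (0 <= p * Lhat L) by (apply Rmult_le_pos; lra).
      assert (0 <= (p + 1/2) * sqrt dx) by (apply Rmult_le_pos; lra).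
      assert (0 <= (2 * p * Lhat L + 1 / 2) * dx) by (apply Rmult_le_pos; lra). lra. }
    assert (dt * (r * D) < dx).
    { apply (Rmult_lt_compat_r (r * D)) in He2; [|nra].
      unfold Rdiv in He2. rewrite Rmult_assoc, Rinv_l in He2 by nra. lra. }
    assert (dt * r <= dt * (r * D)).
    { rewrite <- (Rmult_1_r (dt * r)) at 1. rewrite <- Rmult_assoc.
      apply Rmult_le_compat_l; auto. apply Rmult_le_pos; lra. }
    lra. }
  assert (Hq : forall m Ed Nd Vd, (m <= M)%nat ->
      dvdm_solution K dx dt E0g N0g V0 m Ed Nd Vd -> qfac dx dt (nsC K (Ed m)) < 1).
  { intros m Ed Nd Vd Hm Hsolm.
    destruct (Hapr K M m HK HM Hm Hdxd V0 HV0 HV0b Ed Nd Vd Hsolm) as [B _].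
    apply (q_bound dx dt r); auto. apply nsC_nonneg.
    apply norm_bound; [lra | lra |]. fold dx in B. lra. }
  assert (Hex : forall m, (m <= M)%nat -> exists Ed Nd Vd, dvdm_solution K dx dt E0g N0g V0 m Ed Nd Vd).
  { induction m as [|m IH]; intros Hm.
    - exists (fun _ => E0g), (fun _ => N0g), (fun _ => V0). split; [|split].
      + intros; auto.
      + intros; auto.
      + intros; lia.
    - destruct (IH ltac:(lia)) as [Ed [Nd [Vd Hsolm]]].
      pose proof (Hq m Ed Nd Vd ltac:(lia) Hsolm) as Hqm.
      destruct Hsolm as [Hp0 [Hi Hst]].
      destruct (Hp0 m (le_n m)) as [PE [PN PV]].
      destruct (step_exists K dx dt (Ed m) (Nd m) (Vd m) HK Hdx Hdt PE PN PV Hqm)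
        as [E1 [N1 [V1 [QE [QN [QV Hstep]]]]]].
      exists (fun j => if Nat.leb j m then Ed j else E1),
             (fun j => if Nat.leb j m then Nd j else N1),
             (fun j => if Nat.leb j m then Vd j else V1).
      split; [|split].
      + intros j Hj. destruct (Nat.leb j m) eqn:Ej.
        * apply Hp0. apply Nat.leb_le; auto.
        * split; auto.
      + intros k. simpl. apply Hi.
      + intros j k Hj. apply step_iff.
        assert (Ej : Nat.leb j m = true) by (apply Nat.leb_le; lia). rewrite Ej.
        destruct (Nat.eq_dec j m) as [->|Hne].
        * assert (Ej' : Nat.leb (S m) m = false) by (apply Nat.leb_gt; lia). rewrite Ej'.
          apply Hstep.
        * assert (Ej' : Nat.leb (S j) m = true) by (apply Nat.leb_le; lia). rewrite Ej'.
          apply step_iff. apply Hst. lia. }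
  destruct (Hex M (le_n M)) as [Ed [Nd [Vd HsolM]]].
  exists Ed, Nd, Vd. split; auto.
  intros Ed' Nd' Vd' HsolM' j k Hj. revert k.
  induction j as [|j IH]; intros k.
  - destruct HsolM as [_ [A _]]. destruct HsolM' as [_ [B _]].
    destruct (A k) as [A1 [A2 A3]]. destruct (B k) as [B1 [B2 B3]].
    rewrite A1, A2, A3, B1, B2, B3. auto.
  - specialize (IH ltac:(lia)).
    assert (FE : Ed' j = Ed j) by (apply functional_extensionality; intros; apply IH).
    assert (FN : Nd' j = Nd j) by (apply functional_extensionality; intros; apply IH).
    assert (FV : Vd' j = Vd j) by (apply functional_extensionality; intros; apply IH).
    pose proof (Hq j Ed Nd Vd ltac:(lia) (sol_mono _ _ _ _ _ _ M j _ _ _ ltac:(lia) HsolM)) as Hqj.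
    destruct HsolM as [P1 [_ S1]]. destruct HsolM' as [P2 [_ S2]].
    destruct (P1 j ltac:(lia)) as [PE [PN PV]].
    destruct (P1 (S j) Hj) as [PE1 [PN1 PV1]].
    destruct (P2 (S j) Hj) as [PE2 [PN2 PV2]].
    assert (T1 : forall k, StepK dx dt (Ed j) (Ed (S j)) (Nd j) (Nd (S j)) (Vd j) (Vd (S j)) k).
    { intros k'. apply step_iff. apply S1. lia. }
    assert (T2 : forall k, StepK dx dt (Ed j) (Ed' (S j)) (Nd j) (Nd' (S j)) (Vd j) (Vd' (S j)) k).
    { intros k'. rewrite <- FE, <- FN, <- FV. apply step_iff. apply S2. lia. }
    destruct (step_unique K dx dt (Ed j) (Nd j) (Vd j) _ _ _ _ _ _ HK Hdx Hdt PE PN PV Hqj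
                PE1 PN1 PV1 PE2 PN2 PV2 T1 T2 k) as [A [B C]].
    auto.
Qed.
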